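(* Let $\lambda>0$ and let $n\ge2$ be an integer. With the notation of the context, 1. $\displaystyle R_1(F)=\frac{e^{-n\lambda}}{2[1-e^{-\lambda}]^{n-1}}\int_0^1 I_0(2\lambda y)\,[e^{\lambda y}-1]^{n-2}\,dy+\frac{e^{-\lambda}+n-1}{2n(n-1)\lambda}-\frac{e^{-\lambda}}{(n-1)\lambda}$; 2. $\displaystyle R_\infty(F)=\frac{1-e^{-\lambda}}{n\lambda}$.
   Context: $P_\lambda(k)=\frac{1}{1-e^{-\lambda}}\frac{e^{-\lambda}\lambda^k}{k!}$, $k\ge1$, is the zero-truncated Poisson pmf. $X^*$ is a random variable with $\mathbb{P}(X^*=k)=e^{-\lambda}\lambda^{k-1}/(k-1)!$, $k\ge1$. For $x>0$ and real $s>0$, $H(x,s):=\frac{e^{-\lambda}}{1-e^{-\lambda}}\left\{\frac{\exp[\lambda e^{-x}]\,\Gamma(s,\lambda e^{-x})}{\Gamma(s)}-1\right\}$ (equal to $\sum_{k=1}^{s-1}e^{-xk}P_\lambda(k)$ for integer $s\ge1$), with $\Gamma(s,y)$ the upper incomplete gamma function. $\mathscr{L}_F(x)=\sum_{k\ge1}e^{-xk}P_\lambda(k)$. For $\varepsilon>0$, $R_\varepsilon(F)=\int_0^\infty\mathbb{E}\big[e^{-xX^*}H(x,\varepsilon X^* )\big]\,\mathscr{L}_F(x)^{n-2}\,dx$, and $R_1(F)=\int_0^\infty\lim_{\varepsilon\to1}\mathbb{E}[e^{-xX^*}H(x,\varepsilon X^* )]\mathscr{L}_F(x)^{n-2}dx$,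 $R_\infty(F)=\int_0^\infty\lim_{\varepsilon\to\infty}\mathbb{E}[e^{-xX^*}H(x,\varepsilon X^* )]\mathscr{L}_F(x)^{n-2}dx$. $I_0$ is the modified Bessel function of the first kind of order zero. *)

(* Defs.v *)
From Stdlib Require Import Reals.
From Coquelicot Require Import Coquelicot.
Open Scope R_scope.

(* zero-truncated Poisson pmf P_lambda(k), k >= 1 *)
Definition ztp (lam : R) (k : nat) : R :=
  / (1 - exp (- lam)) * (exp (- lam) * lam ^ k / INR (Factorial.fact k)).

(* P(X^star = k+1) = e^{-lambda} lambda^k / k!  (size-biased shift, index k >= 0) *)
Definition Xstar_pmf (lam : R) (k : nat) : R :=
  exp (- lam) * lam ^ k / INR (Factorial.fact k).

Definition Gamma_fn (s : R) : R :=
  RInt_gen (fun t => Rpower t (s - 1) * exp (- t)) (at_right 0) (Rbar_locally p_infty).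

Definition upper_inc_gamma (s y : R) : R :=
  RInt_gen (fun t => Rpower t (s - 1) * exp (- t)) (at_point y) (Rbar_locally p_infty).

Definition Hfun (lam x s : R) : R :=
  exp (- lam) / (1 - exp (- lam)) *
  (exp (lam * exp (- x)) * upper_inc_gamma s (lam * exp (- x)) / Gamma_fn s - 1).

Definition LF (lam x : R) : R :=
  Series (fun k => exp (- x * INR (S k)) * ztp lam (S k)).

(* E[ e^{-x Xs} H(x, eps Xs) ], Xs = X^star *)
Definition EH (lam eps x : R) : R :=
  Series (fun k => Xstar_pmf lam k * exp (- x * INR (S k)) * Hfun lam x (eps * INR (S k))).

Definition I0 (z : R) : R :=
  Series (fun k => (z / 2) ^ (2 * k) / (INR (Factorial.fact k)) ^ 2).

Definition R1_integrand (lam : R) (n : nat) (x : R) : R :=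
  real (Lim (fun eps => EH lam eps x) 1) * LF lam x ^ (n - 2).

Definition Rinf_integrand (lam : R) (n : nat) (x : R) : R :=
  real (Lim (fun eps => EH lam eps x) p_infty) * LF lam x ^ (n - 2).

(* Main.v *)
Require Import Defs.
From Stdlib Require Import Reals.
From Stdlib Require Import Lra Lia ZArith.
From Coquelicot Require Import Coquelicot.
Open Scope R_scope.

Lemma fl_R {T} (F : (T -> Prop) -> Prop) {FF : Filter F} (f : T -> R) (l : R) :
  filterlim f F (locally l) <-> forall eps : posreal, F (fun x => Rabs (f x - l) < eps).
Proof. split; intros H eps; [apply (proj1 (filterlim_locally f l) H eps) | apply filterlim_locally; exact H]. Qed.

Lemma fl_plus {T} (F : (T -> Prop) -> Prop) {FF : Filter F} (f g : T -> R) a b :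
  filterlim f F (locally a) -> filterlim g F (locally b) ->
  filterlim (fun x => f x + g x) F (locally (a + b)).
Proof. intros Hf Hg. apply (filterlim_comp_2 f g Rplus Hf Hg (@filterlim_plus R_AbsRing R_NormedModule a b)). Qed.

Lemma fl_mult {T} (F : (T -> Prop) -> Prop) {FF : Filter F} (f g : T -> R) a b :
  filterlim f F (locally a) -> filterlim g F (locally b) ->
  filterlim (fun x => f x * g x) F (locally (a * b)).
Proof. intros Hf Hg. apply (filterlim_comp_2 f g Rmult Hf Hg (@filterlim_mult R_AbsRing a b)). Qed.

Lemma fl_const {T} (F : (T -> Prop) -> Prop) {FF : Filter F} (a : R) :
  filterlim (fun _ => a) F (locally a).
Proof. apply filterlim_const. Qed.

Lemma fl_opp {T} (F : (T -> Prop) -> Prop) {FF : Filter F} (f : T -> R) a :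
  filterlim f F (locally a) -> filterlim (fun x => - f x) F (locally (- a)).
Proof. intros Hf. apply (filterlim_comp _ _ _ f Ropp F _ _ Hf (@filterlim_opp R_AbsRing R_NormedModule a)). Qed.

Lemma fl_minus {T} (F : (T -> Prop) -> Prop) {FF : Filter F} (f g : T -> R) a b :
  filterlim f F (locally a) -> filterlim g F (locally b) ->
  filterlim (fun x => f x - g x) F (locally (a - b)).
Proof. intros Hf Hg. apply fl_plus; auto. apply fl_opp; auto. Qed.

Lemma fl_inv {T} (F : (T -> Prop) -> Prop) {FF : Filter F} (f : T -> R) a :
  a <> 0 -> filterlim f F (locally a) -> filterlim (fun x => / f x) F (locally (/ a)).
Proof. intros Ha Hf. apply (filterlim_comp _ _ _ f Rinv F _ _ Hf). apply continuous_Rinv; auto. Qed.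

Lemma fl_cont {T} (F : (T -> Prop) -> Prop) {FF : Filter F} (f : T -> R) (g : R -> R) a :
  continuous g a -> filterlim f F (locally a) -> filterlim (fun x => g (f x)) F (locally (g a)).
Proof. intros Hg Hf. apply (filterlim_comp _ _ _ f g F _ _ Hf Hg). Qed.

Lemma fimp {T} {F : (T -> Prop) -> Prop} {FF : Filter F} (P Q : T -> Prop) : F P -> (forall x, P x -> Q x) -> F Q.
Proof. intros H1 H2. exact (filter_imp P Q H2 H1). Qed.

Lemma tannery {T} (F : (T -> Prop) -> Prop) {FF : Filter F} (a : T -> nat -> R) (a0 b : nat -> R) :
  ex_series b ->
  (forall k, filterlim (fun t => a t k) F (locally (a0 k))) ->
  F (fun t => forall k, Rabs (a t k) <= b k) ->
  (forall k, Rabs (a0 k) <= b k) ->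
  filterlim (fun t => Series (a t)) F (locally (Series a0)).
Proof.
  intros Hb Hlim Hdom Hdom0.
  apply (proj2 (fl_R F _ _)). intros eps.
  assert (He3 : 0 < eps / 3) by (destruct eps; simpl; lra).
  assert (Hfin : forall N, filterlim (fun t => sum_f_R0 (a t) N) F (locally (sum_f_R0 a0 N))).
  { induction N; simpl. apply Hlim. apply fl_plus; auto. }
  assert (HbS := Series_correct _ Hb).
  assert (HN : exists N, Rabs (Series b - sum_f_R0 b N) < eps / 3).
  { apply is_series_Reals in HbS. unfold infinite_sum in HbS. destruct (HbS (eps/3) He3) as [N HN].
    exists N. specialize (HN N (le_n N)). unfold R_dist in HN. rewrite Rabs_minus_sym. exact HN. }
  destruct HN as [N HN].
  assert (Htail : forall c : nat -> R, (forall k, Rabs (c k) <= b k) ->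
     Rabs (Series c - sum_f_R0 c N) < eps / 3).
  { intros c Hc.
    assert (Hc' : ex_series c). { apply (ex_series_le c b); auto. }
    assert (Hca : ex_series (fun k => Rabs (c k))). { apply (@ex_series_le R_AbsRing R_CompleteNormedModule _ b); auto.
      intros k. unfold norm; simpl. unfold abs; simpl. rewrite Rabs_Rabsolu. auto. }
    rewrite (Series_incr_n c (S N)) by (lia || auto). simpl pred.
    rewrite (Series_incr_n b (S N)) in HN by (lia || auto). simpl pred in HN.
    replace (sum_f_R0 c N + Series (fun k => c (S N + k)%nat) - sum_f_R0 c N) with (Series (fun k => c (S N + k)%nat)) by ring.
    replace (sum_f_R0 b N + Series (fun k => b (S N + k)%nat) - sum_f_R0 b N) with (Series (fun k => b (S N + k)%nat)) in HN by ring.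
    eapply Rle_lt_trans; [| exact HN].
    eapply Rle_trans. apply Series_Rabs. apply (ex_series_incr_n (fun k => Rabs (c k)) (S N)). auto.
    eapply Rle_trans; [| apply Rle_abs].
    apply Series_le. intros k; split; [apply Rabs_pos | apply Hc].
    apply (ex_series_incr_n b (S N)); auto. }
  assert (Hf := proj1 (fl_R F _ _) (Hfin N) (mkposreal _ He3)).
  eapply filter_imp; [| apply (filter_and _ _ Hf Hdom)].
  intros t [H1 H2]. simpl in H1.
  assert (T1 := Htail (a t) H2). assert (T2 := Htail a0 Hdom0).
  replace (Series (a t) - Series a0) with ((Series (a t) - sum_f_R0 (a t) N) - (Series a0 - sum_f_R0 a0 N) + (sum_f_R0 (a t) N - sum_f_R0 a0 N)) by ring.
  eapply Rle_lt_trans. apply Rabs_triang.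
  eapply Rle_lt_trans. apply Rplus_le_compat_r. apply Rabs_triang.
  rewrite Rabs_Ropp. lra.
Qed.

Lemma frac01 x y : 0 <= x -> x <= y -> 0 < y -> 0 <= x / y <= 1.
Proof. intros. split. apply Rdiv_le_0_compat; lra.
  apply (Rmult_le_reg_r y); [lra|]. unfold Rdiv; rewrite Rmult_assoc, Rinv_l, Rmult_1_r; lra. Qed.

Lemma convex_cont (f : R -> R) (a b x0 : R) : a < x0 < b ->
  (forall u v t, a < u -> u < v -> v < b -> 0 <= t <= 1 ->
     f (t*u + (1-t)*v) <= t * f u + (1-t) * f v) ->
  continuous f x0.
Proof.
  intros [Ha Hb] Hc.
  set (d := Rmin (x0 - a) (b - x0) / 2).
  assert (Hd : 0 < d) by (unfold d; apply Rmin_case; lra).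
  assert (Hd1 : d < x0 - a /\ d < b - x0).
  { assert (Hm: 0 < Rmin (x0-a) (b-x0)) by (apply Rmin_case; lra).
    pose proof (Rmin_l (x0-a) (b-x0)); pose proof (Rmin_r (x0-a) (b-x0)); unfold d; lra. }
  set (f1 := f (x0 - d)). set (f2 := f (x0 + d)).
  set (M := Rabs (f1 - f x0) + Rabs (f2 - f x0) + 1).
  assert (HM : 0 < M) by (unfold M; pose proof (Rabs_pos (f1 - f x0)); pose proof (Rabs_pos (f2 - f x0)); lra).
  assert (key : forall h, Rabs h < d -> Rabs (f (x0 + h) - f x0) <= Rabs h / d * M).
  { intros h Hh.
    destruct (Rle_or_lt 0 h) as [Hh0 | Hh0].
    - rewrite (Rabs_right h) in Hh |- * by lra.
      destruct (Req_dec h 0) as [->|Hhn].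
      { rewrite Rplus_0_r. unfold Rminus. rewrite Rplus_opp_r, Rabs_R0. unfold Rdiv. rewrite !Rmult_0_l. lra. }
      assert (C1 := Hc x0 (x0 + d) (1 - h/d) ltac:(lra) ltac:(lra) ltac:(lra)
                     ltac:(pose proof (frac01 h d ltac:(lra) ltac:(lra) Hd); lra)).
      replace ((1 - h / d) * x0 + (1 - (1 - h / d)) * (x0 + d)) with (x0 + h) in C1 by (field; lra).
      set (D := d + h).
      assert (C2 := Hc (x0 - d) (x0 + h) (h / D) ltac:(lra) ltac:(lra) ltac:(lra)
                     ltac:(unfold D; apply frac01; lra)).
      replace (h / D * (x0 - d) + (1 - h / D) * (x0 + h)) with x0 in C2 by (unfold D; field; lra).
      fold f1 f2 in C1, C2.
      set (g := f (x0 + h)) in *.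
      assert (U1 : g - f x0 <= h / d * (f2 - f x0)) by (replace (h / d * (f2 - f x0)) with (h/d*f2 - h/d * f x0) by ring; lra).
      assert (U2 : d * (f x0 - g) <= h * (f1 - f x0)).
      { apply (Rmult_le_compat_l D) in C2; [|unfold D; lra].
        replace (D * (h / D * f1 + (1 - h / D) * g)) with (h * f1 + d * g) in C2 by (unfold D; field; lra).
        unfold D in C2. nra. }
      assert (U3 : f x0 - g <= h / d * (f1 - f x0)).
      { apply (Rmult_le_reg_l d); [lra|]. replace (d * (h / d * (f1 - f x0))) with (h * (f1 - f x0)) by (field; lra). exact U2. }
      assert (P1 : h / d * (f2 - f x0) <= h / d * Rabs (f2 - f x0)).
      { apply Rmult_le_compat_l; [apply Rdiv_le_0_compat; lra | apply Rle_abs]. }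
      assert (P2 : h / d * (f1 - f x0) <= h / d * Rabs (f1 - f x0)).
      { apply Rmult_le_compat_l; [apply Rdiv_le_0_compat; lra | apply Rle_abs]. }
      assert (P3 : 0 <= h / d) by (apply Rdiv_le_0_compat; lra).
      assert (P4 : h / d * Rabs (f1 - f x0) + h / d * Rabs (f2 - f x0) <= h / d * M).
      { unfold M. rewrite <- Rmult_plus_distr_l. apply Rmult_le_compat_l; lra. }
      assert (P5 : 0 <= h/d * Rabs (f1 - f x0)) by (apply Rmult_le_pos; [lra|apply Rabs_pos]).
      assert (P6 : 0 <= h/d * Rabs (f2 - f x0)) by (apply Rmult_le_pos; [lra|apply Rabs_pos]).
      apply Rabs_le; lra.
    - rewrite (Rabs_left h) in Hh |- * by lra.
      set (k := - h). assert (Hk : 0 < k) by (unfold k; lra).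
      replace (x0 + h) with (x0 - k) by (unfold k; ring).
      assert (C1 := Hc (x0 - d) x0 (k/d) ltac:(lra) ltac:(lra) ltac:(lra)
                     ltac:(apply frac01; unfold k; lra)).
      replace (k / d * (x0 - d) + (1 - k / d) * x0) with (x0 - k) in C1 by (field; lra).
      set (D := d + k).
      assert (C2 := Hc (x0 - k) (x0 + d) (d / D) ltac:(unfold k; lra) ltac:(lra) ltac:(lra)
                     ltac:(unfold D; apply frac01; lra)).
      replace (d / D * (x0 - k) + (1 - d / D) * (x0 + d)) with x0 in C2 by (unfold D; field; lra).
      fold f1 f2 in C1, C2.
      set (g := f (x0 - k)) in *.
      assert (U1 : g - f x0 <= k / d * (f1 - f x0)) by (replace (k / d * (f1 - f x0)) with (k/d*f1 - k/d * f x0) by ring; lra).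
      assert (U2 : d * (f x0 - g) <= k * (f2 - f x0)).
      { apply (Rmult_le_compat_l D) in C2; [|unfold D; lra].
        replace (D * (d / D * g + (1 - d / D) * f2)) with (d * g + k * f2) in C2 by (unfold D; field; lra).
        unfold D in C2. nra. }
      assert (U3 : f x0 - g <= k / d * (f2 - f x0)).
      { apply (Rmult_le_reg_l d); [lra|]. replace (d * (k / d * (f2 - f x0))) with (k * (f2 - f x0)) by (field; lra). exact U2. }
      assert (P3 : 0 <= k / d) by (apply Rdiv_le_0_compat; lra).
      assert (P1 : k / d * (f2 - f x0) <= k / d * Rabs (f2 - f x0)).
      { apply Rmult_le_compat_l; [lra | apply Rle_abs]. }
      assert (P2 : k / d * (f1 - f x0) <= k / d * Rabs (f1 - f x0)).
      { apply Rmult_le_compat_l; [lra | apply Rle_abs]. }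
      assert (P4 : k / d * Rabs (f1 - f x0) + k / d * Rabs (f2 - f x0) <= k / d * M).
      { unfold M. rewrite <- Rmult_plus_distr_l. apply Rmult_le_compat_l; lra. }
      assert (P5 : 0 <= k/d * Rabs (f1 - f x0)) by (apply Rmult_le_pos; [lra|apply Rabs_pos]).
      assert (P6 : 0 <= k/d * Rabs (f2 - f x0)) by (apply Rmult_le_pos; [lra|apply Rabs_pos]).
      fold k. apply Rabs_le; lra. }
  apply continuity_pt_filterlim.
  intros eps Heps.
  exists (Rmin d (eps * d / M)). split.
  { apply Rmin_case; auto. apply Rdiv_lt_0_compat; [apply Rmult_lt_0_compat|]; auto. }
  intros x [_ Hx]. unfold R_dist in *. simpl in *. unfold R_dist in *.
  assert (Hx1 : Rabs (x - x0) < d) by (eapply Rlt_le_trans; [exact Hx | apply Rmin_l]).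
  assert (Hx2 : Rabs (x - x0) < eps * d / M) by (eapply Rlt_le_trans; [exact Hx | apply Rmin_r]).
  specialize (key (x - x0) Hx1). replace (x0 + (x - x0)) with x in key by ring.
  eapply Rle_lt_trans; [exact key|].
  apply (Rmult_lt_reg_r (d / M)). apply Rdiv_lt_0_compat; auto.
  replace (Rabs (x - x0) / d * M * (d / M)) with (Rabs (x - x0)) by (field; lra).
  replace (eps * (d / M)) with (eps * d / M) by (field; lra). exact Hx2.
Qed.

Definition fs (s t : R) : R := Rpower t (s - 1) * exp (- t).

Lemma Rpower_derive (a t : R) : 0 < t -> is_derive (fun x => Rpower x a) t (a * Rpower t (a - 1)).
Proof. intros Ht. apply is_derive_Reals. apply derivable_pt_lim_power; auto. Qed.

Lemma Rpower_cont (a t : R) : 0 < t -> continuous (fun x => Rpower x a) t.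
Proof. intros Ht. apply (@ex_derive_continuous R_AbsRing R_NormedModule). eexists. apply Rpower_derive; auto. Qed.

Lemma Rpower_pos' (t a : R) : 0 < Rpower t a.
Proof. unfold Rpower. apply exp_pos. Qed.

Lemma fs_cont (s t : R) : 0 < t -> continuous (fs s) t.
Proof. intros Ht. unfold fs. apply (continuous_mult (fun x => Rpower x (s-1)) (fun x => exp (- x))).
  apply Rpower_cont; auto. apply (@ex_derive_continuous R_AbsRing R_NormedModule). auto_derive. auto. Qed.

Lemma fs_pos (s t : R) : 0 < fs s t.
Proof. unfold fs. apply Rmult_lt_0_compat. apply Rpower_pos'. apply exp_pos. Qed.

Lemma ex_RInt_pos (f : R -> R) a b : 0 < a -> 0 < b -> (forall t, 0 < t -> continuous f t) -> ex_RInt f a b.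
Proof. intros Ha Hb Hc. apply (@ex_RInt_continuous R_CompleteNormedModule). intros z Hz. apply Hc.
  apply Rlt_le_trans with (Rmin a b); [apply Rmin_case|]; lra. Qed.

Lemma cauchy_cmp {T} (F : (T -> Prop) -> Prop) {FF : ProperFilter F} (g h : T -> R) (P : T -> Prop) :
  F P -> (forall u v, P u -> P v -> Rabs (g u - g v) <= Rabs (h u - h v)) ->
  (exists l, filterlim h F (locally l)) -> exists l, filterlim g F (locally l).
Proof.
  intros HP Hcmp Hh.
  refine (proj1 (@filterlim_locally_cauchy T R_CompleteSpace F FF g) _).
  pose proof (proj2 (@filterlim_locally_cauchy T R_CompleteSpace F FF h) Hh) as Hc; clear Hh; rename Hc into Hh.
  intros eps. destruct (Hh eps) as [Q [HQ HQb]].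
  exists (fun x => P x /\ Q x). split. apply filter_and; auto.
  intros u v [Pu Qu] [Pv Qv]. specialize (HQb u v Qu Qv).
  change (Rabs (g v - g u) < eps). change (Rabs (h v - h u) < eps) in HQb.
  eapply Rle_lt_trans; [|exact HQb]. rewrite (Rabs_minus_sym (g v)), (Rabs_minus_sym (h v)). auto.
Qed.

Lemma gen_from_lim_left (f : R -> R) (Fa : (R -> Prop) -> Prop) {FF : Filter Fa} b l :
  Fa (fun u => ex_RInt f u b) -> filterlim (fun u => RInt f u b) Fa (locally l) ->
  is_RInt_gen f Fa (at_point b) l.
Proof.
  intros Hex Hl. unfold is_RInt_gen.
  apply (filterlimi_lim_ext_loc (fun ab => RInt f (fst ab) (snd ab))).
  - apply (Filter_prod _ _ _ _ (fun y => y = b) Hex (eq_refl b)).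
    intros x y Hx Hy. subst y. apply (@RInt_correct R_CompleteNormedModule). auto.
  - apply (filterlim_ext_loc (fun ab => RInt f (fst ab) b)).
    + apply (Filter_prod _ _ _ (fun _ => True) (fun y => y = b)). apply filter_true. reflexivity.
      intros x y _ Hy; subst; reflexivity.
    + exact (filterlim_comp _ _ _ fst (fun u => RInt f u b) _ Fa _ (filterlim_fst) Hl).
Qed.

Lemma gen_from_lim_right (f : R -> R) (Fb : (R -> Prop) -> Prop) {FF : Filter Fb} a l :
  Fb (fun v => ex_RInt f a v) -> filterlim (fun v => RInt f a v) Fb (locally l) ->
  is_RInt_gen f (at_point a) Fb l.
Proof.
  intros Hex Hl. unfold is_RInt_gen.
  apply (filterlimi_lim_ext_loc (fun ab => RInt f (fst ab) (snd ab))).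
  - apply (Filter_prod _ _ _ (fun y => y = a) _ (eq_refl a) Hex).
    intros x y Hx Hy. subst x. apply (@RInt_correct R_CompleteNormedModule). auto.
  - apply (filterlim_ext_loc (fun ab => RInt f a (snd ab))).
    + apply (Filter_prod _ _ _ (fun y => y = a) (fun _ => True)). reflexivity. apply filter_true.
      intros x y Hx _; subst; reflexivity.
    + exact (filterlim_comp _ _ _ snd (fun v => RInt f a v) _ Fb _ (filterlim_snd) Hl).
Qed.

Lemma RInt_powm1 (s u b : R) : 0 < s -> 0 < u -> 0 < b ->
  is_RInt (fun t => Rpower t (s - 1)) u b (Rpower b s / s - Rpower u s / s).
Proof.
  intros Hs Hu Hb.
  apply (is_RInt_derive (fun t => Rpower t s / s)).
  - intros x Hx. assert (0 < x) by (apply Rlt_le_trans with (Rmin u b); [apply Rmin_case|]; lra).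
    replace (Rpower x (s - 1)) with (/ s * (s * Rpower x (s - 1))) by (field; lra).
    apply (is_derive_ext (fun t => / s * Rpower t s)). intros t; unfold Rdiv; apply Rmult_comm.
    apply is_derive_scal. apply Rpower_derive; auto.
  - intros x Hx. assert (0 < x) by (apply Rlt_le_trans with (Rmin u b); [apply Rmin_case|]; lra).
    apply Rpower_cont; auto.
Qed.

Lemma at_right0_intro (P : R -> Prop) (d : R) : 0 < d -> (forall u, 0 < u < d -> P u) -> at_right 0 P.
Proof. intros Hd H. exists (mkposreal d Hd). intros y Hy Hy0. apply H. split; auto.
  change (Rabs (y - 0) < d) in Hy. rewrite Rminus_0_r in Hy. apply Rabs_def2 in Hy. lra. Qed.

Lemma lim_Rpower_0 (s : R) : 0 < s -> filterlim (fun u => Rpower u s) (at_right 0) (locally 0).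
Proof.
  intros Hs. apply (proj2 (fl_R _ _ _)). intros eps.
  apply (at_right0_intro _ (Rpower eps (/ s))). apply Rpower_pos'.
  intros u [Hu1 Hu2]. rewrite Rminus_0_r, Rabs_right by (apply Rle_ge, Rlt_le, Rpower_pos').
  replace (pos eps) with (Rpower (Rpower eps (/s)) s).
  apply Rlt_Rpower_l; auto. rewrite Rpower_mult, Rinv_l, Rpower_1 by (destruct eps; simpl; lra). auto.
Qed.

Lemma RInt_abs_cmp (f g : R -> R) u v : ex_RInt f u v -> ex_RInt g u v ->
  (forall t, Rmin u v <= t <= Rmax u v -> 0 <= f t <= g t) -> Rabs (RInt f u v) <= Rabs (RInt g u v).
Proof.
  intros Hf Hg H. destruct (Rle_or_lt u v) as [Huv | Huv].
  - rewrite Rmin_left, Rmax_right in H by lra.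
    assert (0 <= RInt f u v) by (apply RInt_ge_0; auto; intros; apply H; lra).
    assert (RInt f u v <= RInt g u v) by (apply RInt_le; auto; intros; apply H; lra).
    rewrite !Rabs_right; lra.
  - rewrite Rmin_right, Rmax_left in H by lra.
    apply ex_RInt_swap in Hf. apply ex_RInt_swap in Hg.
    rewrite <- (opp_RInt_swap f v u Hf), <- (opp_RInt_swap g v u Hg).
    assert (0 <= RInt f v u) by (apply RInt_ge_0; auto; try lra; intros; apply H; lra).
    assert (RInt f v u <= RInt g v u) by (apply RInt_le; auto; try lra; intros; apply H; lra).
    unfold opp; simpl. rewrite !Rabs_Ropp, !Rabs_right; lra.
Qed.

Lemma RInt_diff_left (f : R -> R) u v b : ex_RInt f u b -> ex_RInt f v b -> ex_RInt f u v ->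
  RInt f u b - RInt f v b = RInt f u v.
Proof. intros H1 H2 H3. rewrite <- (RInt_Chasles f u v b) by auto. unfold plus; simpl. ring. Qed.

Lemma lower_exists (s b : R) : 0 < s -> 0 < b ->
  exists l, is_RInt_gen (fs s) (at_right 0) (at_point b) l.
Proof.
  intros Hs Hb.
  assert (Hc : forall t, 0 < t -> continuous (fun x => Rpower x (s - 1)) t) by (intros; apply Rpower_cont; auto).
  assert (Hpos : at_right 0 (fun u => 0 < u)) by (apply (at_right0_intro _ 1); [lra | intros; lra]).
  destruct (cauchy_cmp (at_right 0) (fun u => RInt (fs s) u b) (fun u => RInt (fun x => Rpower x (s - 1)) u b) _ Hpos) as [l Hl].
  - intros u v Hu Hv.
    rewrite !RInt_diff_left by (apply ex_RInt_pos; auto; intros; try apply fs_cont; auto).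
    apply RInt_abs_cmp; try (apply ex_RInt_pos; auto; intros; apply fs_cont; auto).
    intros t Ht. assert (0 < t) by (apply Rlt_le_trans with (Rmin u v); [apply Rmin_case|]; lra).
    unfold fs. split. apply Rlt_le, fs_pos.
    rewrite <- (Rmult_1_r (Rpower t (s-1))) at 2. apply Rmult_le_compat_l. apply Rlt_le, Rpower_pos'.
    rewrite <- exp_0. apply Rlt_le, exp_increasing. lra.
  - exists (Rpower b s / s - 0 / s).
    apply (filterlim_ext_loc (fun u => Rpower b s / s - Rpower u s / s)).
    + apply (fimp _ _ Hpos). intros u Hu. symmetry. apply is_RInt_unique. apply RInt_powm1; auto.
    + apply (fl_minus (at_right 0)). apply (fl_const (at_right 0)). unfold Rdiv. apply (fl_mult (at_right 0)). apply lim_Rpower_0; auto. apply (fl_const (at_right 0)).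
  - exists l. apply (gen_from_lim_left _ (at_right 0)); auto. apply (fimp _ _ Hpos). intros u Hu.
    apply ex_RInt_pos; auto. intros; apply fs_cont; auto.
Qed.

Lemma pow_le_exp (x : R) (n : nat) : 0 <= x -> x ^ n / INR (fact n) <= exp x.
Proof.
  intros Hx. eapply Rle_trans; [| apply (exp_ge_taylor x n Hx)].
  destruct n. simpl. lra.
  rewrite tech5. assert (0 <= sum_f_R0 (fun k => x ^ k / INR (fact k)) n).
  { apply cond_pos_sum. intros k. apply Rdiv_le_0_compat. apply pow_le; auto. apply lt_0_INR, lt_O_fact. }
  lra.
Qed.

Lemma exists_nat_ge (s : R) : exists N : nat, s <= INR N.
Proof.
  destruct (Rle_or_lt s 0). exists 0%nat; simpl; lra.
  destruct (archimed s) as [H1 _]. exists (Z.to_nat (up s)). rewrite INR_IZR_INZ, Z2Nat.id. lra.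
  apply le_IZR; lra.
Qed.

Lemma fs_tail_bound (s : R) (N : nat) (t : R) : s - 1 <= INR N -> 1 <= t ->
  fs s t <= INR (fact (N + 2)) / t ^ 2.
Proof.
  intros HN Ht. unfold fs.
  assert (H1 : Rpower t (s - 1) <= t ^ N).
  { rewrite <- Rpower_pow by lra. apply Rle_Rpower; auto. }
  assert (H2 := pow_le_exp t (N + 2) ltac:(lra)).
  assert (HK : 0 < INR (fact (N + 2))) by apply lt_0_INR, lt_O_fact.
  assert (Htp : 0 < t ^ N) by (apply pow_lt; lra).
  rewrite exp_Ropp.
  assert (He : t ^ (N + 2) <= INR (fact (N + 2)) * exp t).
  { apply (Rmult_le_reg_r (/ INR (fact (N+2)))). apply Rinv_0_lt_compat; auto.
    replace (INR (fact (N + 2)) * exp t * / INR (fact (N + 2))) with (exp t) by (field; lra). exact H2. }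
  rewrite pow_add in He.
  apply Rle_trans with (t ^ N * / exp t).
  apply Rmult_le_compat_r. apply Rlt_le, Rinv_0_lt_compat, exp_pos. auto.
  assert (0 < exp t) by apply exp_pos. assert (0 < t ^ 2) by (apply pow_lt; lra).
  apply (Rmult_le_reg_r (exp t * t ^ 2)). nra.
  replace (t ^ N * / exp t * (exp t * t ^ 2)) with (t ^ N * t ^ 2) by (field; lra).
  replace (INR (fact (N + 2)) / t ^ 2 * (exp t * t ^ 2)) with (INR (fact (N + 2)) * exp t) by (field; lra).
  exact He.
Qed.

Lemma RInt_invsq (K v : R) : 0 < v ->
  is_RInt (fun t => K / t ^ 2) 1 v ((- K / v) - (- K / 1)).
Proof.
  intros Hv.
  apply (is_RInt_derive (fun t => - K / t)).
  - intros x Hx. assert (0 < x) by (apply Rlt_le_trans with (Rmin 1 v); [apply Rmin_case|]; lra).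
    auto_derive; repeat split; try lra; try (intro; nra). field. lra.
  - intros x Hx. assert (0 < x) by (apply Rlt_le_trans with (Rmin 1 v); [apply Rmin_case|]; lra).
    apply (@ex_derive_continuous R_AbsRing R_NormedModule). auto_derive; repeat split; try lra; try (intro; nra).
Qed.

Lemma upper_exists (s : R) : 0 < s ->
  exists l, is_RInt_gen (fs s) (at_point 1) (Rbar_locally p_infty) l.
Proof.
  intros Hs. destruct (exists_nat_ge (s - 1)) as [N HN].
  set (K := INR (fact (N + 2))).
  assert (HK : 0 < K) by apply lt_0_INR, lt_O_fact.
  assert (Hpos : Rbar_locally p_infty (fun v => 1 < v)) by (exists 1; auto).
  assert (Hc : forall t, 0 < t -> continuous (fun x => K / x ^ 2) t).
  { intros t Ht. apply (@ex_derive_continuous R_AbsRing R_NormedModule). auto_derive; repeat split; try lra; try (intro; nra). }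
  destruct (cauchy_cmp (Rbar_locally p_infty) (fun v => RInt (fs s) 1 v) (fun v => RInt (fun x => K / x ^ 2) 1 v) _ Hpos) as [l Hl].
  - intros u v Hu Hv.
    assert (E : forall f, (forall t, 0 < t -> continuous f t) -> RInt f 1 u - RInt f 1 v = - RInt f u v).
    { intros f Hf. rewrite <- (RInt_Chasles f 1 u v) by (apply ex_RInt_pos; auto; lra).
      unfold plus; simpl. ring. }
    rewrite !E by (auto; intros; apply fs_cont; auto). rewrite !Rabs_Ropp.
    apply RInt_abs_cmp; try (apply ex_RInt_pos; auto; try lra; intros; apply fs_cont; auto).
    intros t Ht. assert (1 < t) by (apply Rlt_le_trans with (Rmin u v); [apply Rmin_case|]; lra).
    split. apply Rlt_le, fs_pos. apply fs_tail_bound; auto; lra.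
  - exists (0 - (- K / 1)).
    apply (filterlim_ext_loc (fun v => (- K / v) - (- K / 1))).
    + apply (fimp _ _ Hpos). intros v Hv. symmetry. apply is_RInt_unique. apply RInt_invsq; lra.
    + apply (fl_minus (Rbar_locally p_infty)). 2: apply (fl_const (Rbar_locally p_infty)).
      replace 0 with (- K * 0) by ring. unfold Rdiv. apply (fl_mult (Rbar_locally p_infty)). apply (fl_const (Rbar_locally p_infty)).
      apply (filterlim_comp _ _ _ (fun x => x) Rinv _ (Rbar_locally p_infty)). apply filterlim_id.
      replace (locally 0) with (Rbar_locally (Rbar_inv p_infty)) by reflexivity.
      apply filterlim_Rbar_inv. discriminate.
  - exists l. apply (gen_from_lim_right _ (Rbar_locally p_infty)); auto. apply (fimp _ _ Hpos). intros u Hu.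
    apply ex_RInt_pos; auto; try lra. intros; apply fs_cont; auto.
Qed.

Lemma PS' {T} (F : (T -> Prop) -> Prop) : ProperFilter F -> ProperFilter' F.
Proof. apply Proper_StrongProper. Qed.

Lemma Gam_is (s : R) : 0 < s -> is_RInt_gen (fs s) (at_right 0) (Rbar_locally p_infty) (Gamma_fn s).
Proof.
  intros Hs. destruct (lower_exists s 1 Hs ltac:(lra)) as [l1 H1]. destruct (upper_exists s Hs) as [l2 H2].
  assert (H := is_RInt_gen_Chasles (fs s) 1 l1 l2 H1 H2).
  replace (Gamma_fn s) with (plus l1 l2); auto.
  symmetry. unfold Gamma_fn. apply (@is_RInt_gen_unique R_CompleteNormedModule _ _ (PS' _ (at_right_proper_filter 0)) (PS' _ (Rbar_locally_filter p_infty))).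
  exact H.
Qed.

Lemma UG_is (s y : R) : 0 < s -> 0 < y ->
  is_RInt_gen (fs s) (at_point y) (Rbar_locally p_infty) (upper_inc_gamma s y).
Proof.
  intros Hs Hy. destruct (upper_exists s Hs) as [l2 H2].
  assert (H1 : is_RInt_gen (fs s) (at_point y) (at_point 1) (RInt (fs s) y 1)).
  { apply is_RInt_gen_at_point. apply (@RInt_correct R_CompleteNormedModule). apply ex_RInt_pos; auto; try lra. intros; apply fs_cont; auto. }
  assert (H := is_RInt_gen_Chasles (fs s) 1 _ l2 H1 H2).
  replace (upper_inc_gamma s y) with (plus (RInt (fs s) y 1) l2); auto.
  symmetry. unfold upper_inc_gamma. apply (@is_RInt_gen_unique R_CompleteNormedModule _ _ (PS' _ (at_point_filter y)) (PS' _ (Rbar_locally_filter p_infty))).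
  exact H.
Qed.

Lemma LG_is (s y : R) : 0 < s -> 0 < y ->
  is_RInt_gen (fs s) (at_right 0) (at_point y) (Gamma_fn s - upper_inc_gamma s y).
Proof.
  intros Hs Hy. destruct (lower_exists s y Hs Hy) as [l H].
  assert (HC := is_RInt_gen_Chasles (fs s) y l _ H (UG_is s y Hs Hy)).
  assert (E := @is_RInt_gen_unique R_CompleteNormedModule _ _ (PS' _ (at_right_proper_filter 0)) (PS' _ (Rbar_locally_filter p_infty)) _ _ HC).
  change (RInt_gen (fs s) (at_right 0) (Rbar_locally p_infty)) with (Gamma_fn s) in E.
  unfold plus in E; simpl in E. replace (Gamma_fn s - upper_inc_gamma s y) with l by lra. auto.
Qed.

Lemma gen_le (Fa Fb : (R -> Prop) -> Prop) {FFa : ProperFilter Fa} {FFb : ProperFilter Fb}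
  (f g : R -> R) lf lg :
  filter_prod Fa Fb (fun ab => fst ab <= snd ab) ->
  filter_prod Fa Fb (fun ab => forall x, fst ab <= x <= snd ab -> 0 <= f x <= g x) ->
  is_RInt_gen f Fa Fb lf -> is_RInt_gen g Fa Fb lg -> lf <= lg.
Proof.
  intros H1 H2 Hf Hg. eapply Rle_trans; [apply Rle_abs|].
  apply (@RInt_gen_norm R_CompleteNormedModule Fa Fb FFa FFb f g lf lg H1); auto.
  apply (fimp _ _ H2). intros ab H x Hx. specialize (H x Hx).
  change (Rabs (f x) <= g x). rewrite Rabs_right; lra.
Qed.

Lemma gen_ge0 (Fa Fb : (R -> Prop) -> Prop) {FFa : ProperFilter Fa} {FFb : ProperFilter Fb}
  (f : R -> R) lf :
  filter_prod Fa Fb (fun ab => fst ab <= snd ab) ->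
  filter_prod Fa Fb (fun ab => forall x, fst ab <= x <= snd ab -> 0 <= f x) ->
  is_RInt_gen f Fa Fb lf -> 0 <= lf.
Proof.
  intros H1 H2 Hf.
  assert (H0 := is_RInt_gen_scal _ 0 _ Hf).
  replace 0 with (scal 0 lf) at 1 by (unfold scal; simpl; unfold mult; simpl; ring).
  apply (gen_le Fa Fb (fun y => scal 0 (f y)) f); auto.
  apply (fimp _ _ H2). intros ab H x Hx. specialize (H x Hx).
  unfold scal; simpl; unfold mult; simpl. lra.
Qed.

Lemma fp_r0_inf : filter_prod (at_right 0) (Rbar_locally p_infty) (fun ab => 0 < fst ab /\ fst ab <= snd ab).
Proof.
  apply (Filter_prod _ _ _ (fun a => 0 < a < 1) (fun b => 1 < b)).
  apply (at_right0_intro _ 1); [lra | auto]. exists 1; auto. simpl; intros; lra.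
Qed.

Lemma fp_pt_inf y : filter_prod (at_point y) (Rbar_locally p_infty) (fun ab => fst ab = y /\ fst ab <= snd ab).
Proof.
  apply (Filter_prod _ _ _ (fun a => a = y) (fun b => y < b)). reflexivity. exists y; auto. simpl; intros; lra.
Qed.

Lemma fp_r0_pt y : 0 < y -> filter_prod (at_right 0) (at_point y) (fun ab => 0 < fst ab /\ fst ab <= snd ab /\ snd ab = y).
Proof.
  intros Hy. apply (Filter_prod _ _ _ (fun a => 0 < a < y) (fun b => b = y)).
  apply (at_right0_intro _ y); [lra | auto]. reflexivity. simpl; intros; lra.
Qed.

Lemma UG_ge0 s y : 0 < s -> 0 < y -> 0 <= upper_inc_gamma s y.
Proof.
  intros Hs Hy. apply (gen_ge0 (at_point y) (Rbar_locally p_infty) (fs s)).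
  apply (fimp _ _ (fp_pt_inf y)). intros ab H; apply H.
  apply (fimp _ _ (fp_pt_inf y)). intros ab H x Hx. apply Rlt_le, fs_pos. apply UG_is; auto.
Qed.

Lemma LG_ge0 s y : 0 < s -> 0 < y -> 0 <= Gamma_fn s - upper_inc_gamma s y.
Proof.
  intros Hs Hy. apply (gen_ge0 (at_right 0) (at_point y) (fs s)).
  apply (fimp _ _ (fp_r0_pt y Hy)). intros ab H; apply H.
  apply (fimp _ _ (fp_r0_pt y Hy)). intros ab H x Hx. apply Rlt_le, fs_pos. apply LG_is; auto.
Qed.

Lemma exp_convex a b t : 0 <= t <= 1 -> exp (t * a + (1 - t) * b) <= t * exp a + (1 - t) * exp b.
Proof.
  intros Ht. set (m := t * a + (1 - t) * b).
  assert (Ha : exp a = exp m * exp (a - m)) by (rewrite <- exp_plus; f_equal; ring).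
  assert (Hb : exp b = exp m * exp (b - m)) by (rewrite <- exp_plus; f_equal; ring).
  pose proof (exp_ineq1_le (a - m)). pose proof (exp_ineq1_le (b - m)). pose proof (exp_pos m).
  rewrite Ha, Hb.
  assert (E : t * (exp m * (1 + (a - m))) + (1 - t) * (exp m * (1 + (b - m))) = exp m) by (unfold m; ring).
  assert (t * (exp m * (1 + (a - m))) <= t * (exp m * exp (a - m))) by (apply Rmult_le_compat_l; [lra|]; apply Rmult_le_compat_l; lra).
  assert ((1-t) * (exp m * (1 + (b - m))) <= (1-t) * (exp m * exp (b - m))) by (apply Rmult_le_compat_l; [lra|]; apply Rmult_le_compat_l; lra).
  lra.
Qed.

Lemma fs_convex s1 s2 t x : 0 < x -> 0 <= t <= 1 ->
  fs (t * s1 + (1 - t) * s2) x <= t * fs s1 x + (1 - t) * fs s2 x.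
Proof.
  intros Hx Ht. unfold fs, Rpower.
  replace ((t * s1 + (1 - t) * s2 - 1) * ln x) with (t * ((s1 - 1) * ln x) + (1 - t) * ((s2 - 1) * ln x)) by ring.
  pose proof (exp_convex ((s1 - 1) * ln x) ((s2 - 1) * ln x) t Ht). pose proof (exp_pos (- x)).
  apply Rmult_le_compat_r with (r := exp (- x)) in H; [|lra]. lra.
Qed.

Lemma Gam_convex s1 s2 t : 0 < s1 -> 0 < s2 -> 0 <= t <= 1 ->
  Gamma_fn (t * s1 + (1 - t) * s2) <= t * Gamma_fn s1 + (1 - t) * Gamma_fn s2.
Proof.
  intros H1 H2 Ht.
  assert (Hs : 0 < t * s1 + (1 - t) * s2) by (destruct (Req_dec t 0); [subst; lra | nra]).
  assert (HG := is_RInt_gen_plus _ _ _ _ (is_RInt_gen_scal _ t _ (Gam_is s1 H1)) (is_RInt_gen_scal _ (1 - t) _ (Gam_is s2 H2))).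
  refine (gen_le (at_right 0) (Rbar_locally p_infty) (fs (t * s1 + (1 - t) * s2)) _ _ _ _ _ (Gam_is _ Hs) HG).

  apply (fimp _ _ fp_r0_inf). intros ab H; apply H.
  apply (fimp _ _ fp_r0_inf). intros ab H x Hx. split. apply Rlt_le, fs_pos.
  change (fs (t * s1 + (1 - t) * s2) x <= t * fs s1 x + (1 - t) * fs s2 x). apply fs_convex; auto. lra.
Qed.

Lemma UG_convex s1 s2 t y : 0 < s1 -> 0 < s2 -> 0 <= t <= 1 -> 0 < y ->
  upper_inc_gamma (t * s1 + (1 - t) * s2) y <= t * upper_inc_gamma s1 y + (1 - t) * upper_inc_gamma s2 y.
Proof.
  intros H1 H2 Ht Hy.
  assert (Hs : 0 < t * s1 + (1 - t) * s2) by (destruct (Req_dec t 0); [subst; lra | nra]).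
  assert (HG := is_RInt_gen_plus _ _ _ _ (is_RInt_gen_scal _ t _ (UG_is s1 y H1 Hy)) (is_RInt_gen_scal _ (1 - t) _ (UG_is s2 y H2 Hy))).
  refine (gen_le (at_point y) (Rbar_locally p_infty) (fs (t * s1 + (1 - t) * s2)) _ _ _ _ _ (UG_is _ y Hs Hy) HG).

  apply (fimp _ _ (fp_pt_inf y)). intros ab H; apply H.
  apply (fimp _ _ (fp_pt_inf y)). intros ab H x Hx. split. apply Rlt_le, fs_pos.
  change (fs (t * s1 + (1 - t) * s2) x <= t * fs s1 x + (1 - t) * fs s2 x). apply fs_convex; auto. destruct ab as [a b]; simpl in *; destruct H; lra.
Qed.

Lemma Gam_cont s0 : 0 < s0 -> continuous Gamma_fn s0.
Proof.
  intros Hs. apply (convex_cont _ 0 (s0 + 1)). lra.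
  intros u v t Hu Huv Hv Ht. apply Gam_convex; auto; lra.
Qed.

Lemma UG_cont s0 y : 0 < s0 -> 0 < y -> continuous (fun s => upper_inc_gamma s y) s0.
Proof.
  intros Hs Hy. apply (convex_cont _ 0 (s0 + 1)). lra.
  intros u v t Hu Huv Hv Ht. apply UG_convex; auto; lra.
Qed.

Definition Ek (k : nat) (y : R) : R := sum_f_R0 (fun j => y ^ j / INR (fact j)) k.

Lemma Ek_derive k t : is_derive (Ek (S k)) t (Ek k t).
Proof.
  induction k.
  - unfold Ek. simpl. auto_derive. auto. simpl. field.
  - unfold Ek in *. 
    apply (is_derive_ext (fun t => sum_f_R0 (fun j => t ^ j / INR (fact j)) (S k) + t ^ (S (S k)) / INR (fact (S (S k))))).
    { intros; rewrite (tech5 _ (S k)); reflexivity. }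
    rewrite tech5.
    apply (@is_derive_plus R_AbsRing R_NormedModule); auto.
    replace (t ^ S k / INR (fact (S k))) with (/ INR (fact (S (S k))) * (INR (S (S k)) * 1 * t ^ pred (S (S k)))).
    apply (is_derive_ext (fun t => / INR (fact (S (S k))) * t ^ S (S k))). intros; simpl; unfold Rdiv; apply Rmult_comm.
    apply is_derive_scal. apply is_derive_pow. apply (@is_derive_id R_AbsRing).
    rewrite (fact_simpl (S k)), mult_INR. simpl pred. field.
    split. apply INR_fact_neq_0. apply not_0_INR. lia.
Qed.

Lemma Ek_0 k : Ek k 0 = 1.
Proof. induction k. unfold Ek; simpl; field. unfold Ek in *. rewrite tech5, IHk.
  replace (0 ^ S k) with 0 by (simpl; ring). unfold Rdiv; rewrite Rmult_0_l; ring. Qed.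

Lemma Ek_pos k y : 0 <= y -> 0 < Ek k y.
Proof. intros Hy. induction k. unfold Ek; simpl; lra. unfold Ek in *; rewrite tech5.
  assert (0 <= y ^ S k / INR (fact (S k))) by (apply Rdiv_le_0_compat; [apply pow_le; auto | apply lt_0_INR, lt_O_fact]). lra. Qed.

Definition Fk (k : nat) (t : R) : R := - (exp (- t) * INR (fact k) * Ek k t).

Lemma Fk_derive k t : is_derive (Fk k) t (exp (- t) * t ^ k).
Proof.
  destruct k.
  - unfold Fk, Ek. simpl. auto_derive. auto. field.
  - unfold Fk.
    assert (H := Ek_derive k t).
    apply (is_derive_ext (fun t => (-1 * INR (fact (S k))) * (exp (- t) * Ek (S k) t))). intros; simpl; ring.
    replace (exp (- t) * t ^ S k) with ((-1 * INR (fact (S k))) * ((- exp (- t)) * Ek (S k) t + exp (- t) * Ek k t)).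
    apply is_derive_scal. apply (@is_derive_mult R_AbsRing (fun x => exp (- x)) (Ek (S k)) t). auto_derive; auto. ring. exact H. intros; apply Rmult_comm.
    unfold Ek. rewrite tech5. rewrite (fact_simpl k), mult_INR. field. split. apply INR_fact_neq_0. apply not_0_INR; lia.
Qed.

Lemma cont_at_right0 (f : R -> R) : continuous f 0 -> filterlim f (at_right 0) (locally (f 0)).
Proof. intros H. apply (filterlim_filter_le_1 f (@filter_le_within R (locally 0) _ (fun u => 0 < u))). exact H. Qed.

Lemma cont_at_point (f : R -> R) y : filterlim f (at_point y) (locally (f y)).
Proof. intros P HP. apply locally_singleton in HP. exact HP. Qed.

Lemma lim_inf_bound (f : R -> R) C : (forall t, 1 <= t -> Rabs (f t) <= C / t) ->
  filterlim f (Rbar_locally p_infty) (locally 0).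
Proof.
  intros H. apply (proj2 (fl_R _ _ _)). intros eps.
  assert (HC : 0 <= C) by (specialize (H 1 (Rle_refl 1)); pose proof (Rabs_pos (f 1)); unfold Rdiv in H; rewrite Rinv_1 in H; lra).
  exists (Rmax 1 (2 * C / eps)). intros x Hx.
  assert (H1 : 1 < x) by (eapply Rle_lt_trans; [apply Rmax_l | exact Hx]).
  assert (H2 : 2 * C / eps < x) by (eapply Rle_lt_trans; [apply Rmax_r | exact Hx]).
  rewrite Rminus_0_r. eapply Rle_lt_trans. apply H; lra.
  destruct eps as [e He]; simpl in *.
  apply (Rmult_lt_reg_r x); [lra|]. unfold Rdiv. rewrite Rmult_assoc, Rinv_l, Rmult_1_r by lra.
  apply (Rmult_lt_compat_l e) in H2; auto. unfold Rdiv in H2.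
  replace (e * (2 * C * / e)) with (2 * C) in H2 by (field; lra). nra.
Qed.

Lemma Ek_le k t : 1 <= t -> Ek k t <= INR (S k) * t ^ k.
Proof.
  intros Ht. induction k. unfold Ek; simpl; lra.
  unfold Ek in *. rewrite tech5.
  assert (Htk : t ^ k <= t ^ S k) by (simpl; pose proof (pow_le t k ltac:(lra)); nra).
  assert (Hf : t ^ S k / INR (fact (S k)) <= t ^ S k).
  { unfold Rdiv. rewrite <- (Rmult_1_r (t ^ S k)) at 2. apply Rmult_le_compat_l. apply pow_le; lra.
    rewrite <- Rinv_1. apply Rinv_le_contravar. lra. apply (le_INR 1). apply lt_O_fact. }
  rewrite (S_INR (S k)). pose proof (pos_INR (S k)). nra.
Qed.

Lemma Fk_lim_inf k : filterlim (Fk k) (Rbar_locally p_infty) (locally 0).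
Proof.
  apply (lim_inf_bound _ (INR (fact k) * INR (S k) * INR (fact (S k)))).
  intros t Ht. unfold Fk. rewrite Rabs_Ropp.
  assert (HE := Ek_pos k t ltac:(lra)).
  rewrite Rabs_right by (apply Rle_ge; apply Rmult_le_pos; [apply Rmult_le_pos; [apply Rlt_le, exp_pos| apply pos_INR]| lra]).
  assert (H1 := Ek_le k t Ht).
  assert (H2 := pow_le_exp t (S k) ltac:(lra)).
  assert (Hf : 0 < INR (fact k)) by apply lt_0_INR, lt_O_fact.
  assert (Hf1 : 0 < INR (fact (S k))) by apply lt_0_INR, lt_O_fact.
  assert (He : 0 < exp t) by apply exp_pos.
  rewrite exp_Ropp.
  assert (H3 : t ^ k * / exp t <= INR (fact (S k)) / t).
  { apply (Rmult_le_reg_r (exp t * t / INR (fact (S k)))). apply Rdiv_lt_0_compat; nra.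
    replace (t ^ k * / exp t * (exp t * t / INR (fact (S k)))) with (t ^ S k / INR (fact (S k))) by (rewrite <- tech_pow_Rmult; field; repeat split; lra).
    replace (INR (fact (S k)) / t * (exp t * t / INR (fact (S k)))) with (exp t) by (field; repeat split; lra). auto. }
  assert (Hp : 0 < t ^ k) by (apply pow_lt; lra).
  apply Rle_trans with (/ exp t * INR (fact k) * (INR (S k) * t ^ k)).
  apply Rmult_le_compat_l; auto. apply Rmult_le_pos; [apply Rlt_le, Rinv_0_lt_compat; auto | lra].
  pose proof (pos_INR (S k)).
  replace (/ exp t * INR (fact k) * (INR (S k) * t ^ k)) with (INR (fact k) * INR (S k) * (t ^ k * / exp t)) by ring.
  replace (INR (fact k) * INR (S k) * INR (fact (S k)) / t) with (INR (fact k) * INR (S k) * (INR (fact (S k)) / t)) by (field; lra).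
  apply Rmult_le_compat_l; auto. nra.
Qed.

Lemma gen_antider (F f : R -> R) (Fa Fb : (R -> Prop) -> Prop) {FFa : Filter Fa} {FFb : Filter Fb} la lb :
  Fa (fun a => 0 < a) -> Fb (fun b => 0 < b) ->
  (forall x, 0 < x -> is_derive F x (f x)) -> (forall x, 0 < x -> continuous f x) ->
  filterlim F Fa (locally la) -> filterlim F Fb (locally lb) ->
  is_RInt_gen f Fa Fb (lb - la).
Proof.
  intros Ha Hb HD HC HLa HLb. unfold is_RInt_gen.
  apply (filterlimi_lim_ext_loc (fun ab => F (snd ab) - F (fst ab))).
  - apply (Filter_prod _ _ _ _ _ Ha Hb). intros a b Hpa Hpb. simpl.
    apply (is_RInt_derive F f); intros x Hx; assert (0 < x) by (apply Rlt_le_trans with (Rmin a b); [apply Rmin_case|]; lra); auto.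
  - apply (fl_minus (filter_prod Fa Fb)).
    exact (filterlim_comp _ _ _ snd F _ Fb _ (filterlim_snd) HLb).
    exact (filterlim_comp _ _ _ fst F _ Fa _ (filterlim_fst) HLa).
Qed.

Lemma fs_nat k t : 0 < t -> fs (INR (S k)) t = exp (- t) * t ^ k.
Proof. intros Ht. unfold fs. rewrite S_INR. replace (INR k + 1 - 1) with (INR k) by ring.
  rewrite Rpower_pow by auto. ring. Qed.

Lemma Gam_nat k : Gamma_fn (INR (S k)) = INR (fact k).
Proof.
  assert (H : is_RInt_gen (fun t => exp (- t) * t ^ k) (at_right 0) (Rbar_locally p_infty) (0 - Fk k 0)).
  { apply (gen_antider (Fk k) _ (at_right 0) (Rbar_locally p_infty)).
    apply (at_right0_intro _ 1); [lra| intros; lra]. exists 0; auto.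
    intros; apply Fk_derive.
    intros x _. apply (@ex_derive_continuous R_AbsRing R_NormedModule). auto_derive; auto.
    apply cont_at_right0. apply (@ex_derive_continuous R_AbsRing R_NormedModule). eexists; apply Fk_derive.
    apply Fk_lim_inf. }
  assert (H2 := Gam_is (INR (S k)) ltac:(apply lt_0_INR; lia)).
  apply (is_RInt_gen_ext _ (fs (INR (S k)))) in H.
  2:{ apply (fimp _ _ fp_r0_inf). intros [a b] [Ha Hab] x Hx. cbn [fst snd] in *. rewrite fs_nat; auto.
      apply Rlt_le_trans with (Rmin a b); [apply Rmin_case|]; lra. }
  rewrite <- (@is_RInt_gen_unique R_CompleteNormedModule _ _ (PS' _ (at_right_proper_filter 0)) (PS' _ (Rbar_locally_filter p_infty)) _ _ H2).
  rewrite (@is_RInt_gen_unique R_CompleteNormedModule _ _ (PS' _ (at_right_proper_filter 0)) (PS' _ (Rbar_locally_filter p_infty)) _ _ H).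
  unfold Fk. rewrite Ek_0, Ropp_0, exp_0. ring.
Qed.

Lemma UG_nat k y : 0 < y -> upper_inc_gamma (INR (S k)) y = exp (- y) * INR (fact k) * Ek k y.
Proof.
  intros Hy.
  assert (H : is_RInt_gen (fun t => exp (- t) * t ^ k) (at_point y) (Rbar_locally p_infty) (0 - Fk k y)).
  { apply (gen_antider (Fk k) _ (at_point y) (Rbar_locally p_infty)).
    exact Hy. exists 0; auto.
    intros; apply Fk_derive.
    intros x _. apply (@ex_derive_continuous R_AbsRing R_NormedModule). auto_derive; auto.
    apply cont_at_point. apply Fk_lim_inf. }
  assert (H2 := UG_is (INR (S k)) y ltac:(apply lt_0_INR; lia) Hy).
  apply (is_RInt_gen_ext _ (fs (INR (S k)))) in H.
  2:{ apply (fimp _ _ (fp_pt_inf y)). intros [a b] [Ha Hab] x Hx. cbn [fst snd] in *. rewrite fs_nat; auto.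
      apply Rlt_le_trans with (Rmin a b); [apply Rmin_case|]; lra. }
  rewrite <- (@is_RInt_gen_unique R_CompleteNormedModule _ _ (PS' _ (at_point_filter y)) (PS' _ (Rbar_locally_filter p_infty)) _ _ H2).
  rewrite (@is_RInt_gen_unique R_CompleteNormedModule _ _ (PS' _ (at_point_filter y)) (PS' _ (Rbar_locally_filter p_infty)) _ _ H).
  unfold Fk. ring.
Qed.

Lemma UG_lb s y : 0 < s -> 0 < y -> RInt (fs s) y (y + 1) <= upper_inc_gamma s y.
Proof.
  intros Hs Hy.
  assert (H1 : is_RInt_gen (fs s) (at_point y) (at_point (y + 1)) (RInt (fs s) y (y + 1))).
  { apply is_RInt_gen_at_point. apply (@RInt_correct R_CompleteNormedModule). apply ex_RInt_pos; auto; try lra. intros; apply fs_cont; auto. }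
  assert (H2 := UG_is s (y + 1) Hs ltac:(lra)).
  assert (H := is_RInt_gen_Chasles (fs s) (y + 1) _ _ H1 H2).
  assert (E := @is_RInt_gen_unique R_CompleteNormedModule _ _ (PS' _ (at_point_filter y)) (PS' _ (Rbar_locally_filter p_infty)) _ _ H).
  change (RInt_gen (fs s) (at_point y) (Rbar_locally p_infty)) with (upper_inc_gamma s y) in E.
  rewrite E. unfold plus; simpl. pose proof (UG_ge0 s (y + 1) Hs ltac:(lra)). lra.
Qed.

Lemma RInt_fs_pos s y : 0 < y -> 0 < RInt (fs s) y (y + 1).
Proof. intros Hy. apply RInt_gt_0. lra. intros; apply fs_pos. intros x Hx; apply fs_cont; lra. Qed.

Lemma Gam_ge_UG s y : 0 < s -> 0 < y -> upper_inc_gamma s y <= Gamma_fn s.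
Proof. intros Hs Hy. pose proof (LG_ge0 s y Hs Hy). lra. Qed.

Lemma Gam_pos s : 0 < s -> 0 < Gamma_fn s.
Proof. intros Hs. pose proof (Gam_ge_UG s 1 Hs ltac:(lra)). pose proof (UG_lb s 1 Hs ltac:(lra)).
  pose proof (RInt_fs_pos s 1 ltac:(lra)). lra. Qed.

Lemma ratio_bounds s y : 0 < s -> 0 < y -> 0 <= upper_inc_gamma s y / Gamma_fn s <= 1.
Proof.
  intros Hs Hy. pose proof (Gam_pos s Hs). pose proof (UG_ge0 s y Hs Hy). pose proof (Gam_ge_UG s y Hs Hy).
  split. apply Rdiv_le_0_compat; auto.
  apply (Rmult_le_reg_r (Gamma_fn s)); auto. unfold Rdiv; rewrite Rmult_assoc, Rinv_l; lra.
Qed.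

Definition cc (lam : R) : R := exp (- lam) / (1 - exp (- lam)).

Lemma cc_pos lam : 0 < lam -> 0 < cc lam.
Proof. intros H. unfold cc. assert (exp (- lam) < 1) by (rewrite <- exp_0; apply exp_increasing; lra).
  apply Rdiv_lt_0_compat. apply exp_pos. lra. Qed.

Lemma Hfun_eq lam x s : Hfun lam x s = cc lam * (exp (lam * exp (- x)) * (upper_inc_gamma s (lam * exp (- x)) / Gamma_fn s) - 1).
Proof. unfold Hfun, cc. unfold Rdiv. ring. Qed.

Lemma Hfun_bound lam x s : 0 < lam -> 0 < s ->
  Rabs (Hfun lam x s) <= cc lam * (exp (lam * exp (- x)) + 1).
Proof.
  intros Hl Hs. rewrite Hfun_eq. set (y := lam * exp (- x)).
  assert (Hy : 0 < y) by (unfold y; apply Rmult_lt_0_compat; auto; apply exp_pos).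
  pose proof (ratio_bounds s y Hs Hy). pose proof (cc_pos lam Hl). pose proof (exp_pos y).
  rewrite Rabs_mult, (Rabs_right (cc lam)) by lra. apply Rmult_le_compat_l. lra.
  apply Rabs_le. split; nra.
Qed.

Lemma Hfun_nat lam x k : 0 < lam ->
  Hfun lam x (INR (S k)) = cc lam * (Ek k (lam * exp (- x)) - 1).
Proof.
  intros Hl. rewrite Hfun_eq. set (y := lam * exp (- x)).
  assert (Hy : 0 < y) by (unfold y; apply Rmult_lt_0_compat; auto; apply exp_pos).
  rewrite Gam_nat, UG_nat by auto. f_equal. f_equal.
  rewrite exp_Ropp. field. repeat split; try apply INR_fact_neq_0; try (apply Rgt_not_eq, exp_pos).
Qed.

Lemma Hfun_cont lam x s0 : 0 < lam -> 0 < s0 ->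
  filterlim (fun s => Hfun lam x s) (locally s0) (locally (Hfun lam x s0)).
Proof.
  intros Hl Hs. set (y := lam * exp (- x)).
  assert (Hy : 0 < y) by (unfold y; apply Rmult_lt_0_compat; auto; apply exp_pos).
  apply (filterlim_ext (fun s => cc lam * (exp y * (upper_inc_gamma s y * / Gamma_fn s) - 1))).
  intros; rewrite Hfun_eq; reflexivity.
  rewrite Hfun_eq. fold y.
  apply (fl_mult (locally s0)). apply (fl_const (locally s0)).
  apply (fl_minus (locally s0)). 2: apply (fl_const (locally s0)).
  apply (fl_mult (locally s0)). apply (fl_const (locally s0)).
  apply (fl_mult (locally s0)). apply (UG_cont s0 y Hs Hy).
  apply (fl_inv (locally s0)). apply Rgt_not_eq, Gam_pos; auto. apply Gam_cont; auto.
Qed.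

Lemma pow_lower_is s y : 0 < s -> 0 < y ->
  is_RInt_gen (fun t => Rpower t (s - 1)) (at_right 0) (at_point y) (Rpower y s / s).
Proof.
  intros Hs Hy.
  assert (Hpos : at_right 0 (fun u => 0 < u)) by (apply (at_right0_intro _ 1); [lra | intros; lra]).
  apply (gen_from_lim_left _ (at_right 0)).
  apply (fimp _ _ Hpos). intros u Hu. apply ex_RInt_pos; auto. intros; apply Rpower_cont; auto.
  replace (Rpower y s / s) with (Rpower y s / s - 0 / s) by (unfold Rdiv; ring).
  apply (filterlim_ext_loc (fun u => Rpower y s / s - Rpower u s / s)).
  + apply (fimp _ _ Hpos). intros u Hu. symmetry. apply is_RInt_unique. apply RInt_powm1; auto.
  + apply (fl_minus (at_right 0)). apply (fl_const (at_right 0)). unfold Rdiv. apply (fl_mult (at_right 0)). apply lim_Rpower_0; auto. apply (fl_const (at_right 0)).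
Qed.

Lemma LG_le s y : 0 < s -> 0 < y -> Gamma_fn s - upper_inc_gamma s y <= Rpower y s / s.
Proof.
  intros Hs Hy.
  apply (gen_le (at_right 0) (at_point y) (fs s) (fun t => Rpower t (s - 1))).
  apply (fimp _ _ (fp_r0_pt y Hy)). intros ab H; apply H.
  apply (fimp _ _ (fp_r0_pt y Hy)). intros [a b] H t Ht. cbn [fst snd] in *. split. apply Rlt_le, fs_pos.
  unfold fs. rewrite <- (Rmult_1_r (Rpower t (s-1))) at 2. apply Rmult_le_compat_l. apply Rlt_le, Rpower_pos'.
  rewrite <- exp_0. apply Rlt_le, exp_increasing. lra.
  apply LG_is; auto. apply pow_lower_is; auto.
Qed.

Lemma Gam_lb s y : 1 <= s -> 0 < y -> Rpower y (s - 1) * exp (- (y + 1)) <= Gamma_fn s.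
Proof.
  intros Hs Hy.
  pose proof (Gam_ge_UG s y ltac:(lra) Hy). pose proof (UG_lb s y ltac:(lra) Hy).
  assert (Rpower y (s - 1) * exp (- (y + 1)) <= RInt (fs s) y (y + 1)).
  { replace (Rpower y (s - 1) * exp (- (y + 1))) with (RInt (fun _ => Rpower y (s - 1) * exp (- (y + 1))) y (y + 1)).
    apply RInt_le. lra. apply (@ex_RInt_const R_CompleteNormedModule). apply ex_RInt_pos; auto; try lra. intros; apply fs_cont; auto.
    intros t Ht. unfold fs. apply Rmult_le_compat. apply Rlt_le, Rpower_pos'. apply Rlt_le, exp_pos.
    apply Rle_Rpower_l; lra. apply Rlt_le, exp_increasing; lra.
    rewrite RInt_const. unfold scal; simpl; unfold mult; simpl. ring. }
  lra.
Qed.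

Lemma ratio_lim y : 0 < y ->
  filterlim (fun s => upper_inc_gamma s y / Gamma_fn s) (Rbar_locally p_infty) (locally 1).
Proof.
  intros Hy.
  assert (H : filterlim (fun s => upper_inc_gamma s y / Gamma_fn s - 1) (Rbar_locally p_infty) (locally 0)).
  { apply (lim_inf_bound _ (y * exp (y + 1))). intros s Hs.
    pose proof (Gam_pos s ltac:(lra)). pose proof (LG_le s y ltac:(lra) Hy). pose proof (LG_ge0 s y ltac:(lra) Hy).
    pose proof (Gam_lb s y Hs Hy).
    assert (E : upper_inc_gamma s y / Gamma_fn s - 1 = - ((Gamma_fn s - upper_inc_gamma s y) / Gamma_fn s)) by (field; lra).
    rewrite E, Rabs_Ropp, Rabs_right by (apply Rle_ge, Rdiv_le_0_compat; lra).
    assert (Ep : Rpower y s = Rpower y (s - 1) * y).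
    { rewrite <- (Rpower_1 y) at 3 by auto. rewrite <- Rpower_plus. f_equal; ring. }
    rewrite Ep in *. pose proof (Rpower_pos' y (s - 1)) as Hp. pose proof (exp_pos (- (y + 1))).
    assert (Ee : exp (y + 1) = / exp (- (y + 1))) by (rewrite exp_Ropp, Rinv_inv; auto).
    rewrite Ee.
    apply (Rmult_le_reg_r (Gamma_fn s * s * exp (- (y + 1)))). apply Rmult_lt_0_compat; [nra | auto].
    replace ((Gamma_fn s - upper_inc_gamma s y) / Gamma_fn s * (Gamma_fn s * s * exp (- (y + 1)))) with ((Gamma_fn s - upper_inc_gamma s y) * s * exp (- (y + 1))) by (field; lra).
    replace (y * / exp (- (y + 1)) / s * (Gamma_fn s * s * exp (- (y + 1)))) with (y * Gamma_fn s) by (field; lra).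
    assert (Hb : (Gamma_fn s - upper_inc_gamma s y) * s <= Rpower y (s - 1) * y).
    { apply (Rmult_le_reg_r (/ s)). apply Rinv_0_lt_compat; lra. replace ((Gamma_fn s - upper_inc_gamma s y) * s * / s) with (Gamma_fn s - upper_inc_gamma s y) by (field; lra). exact H0. }
    assert (Hb2 : (Gamma_fn s - upper_inc_gamma s y) * s * exp (- (y + 1)) <= Rpower y (s - 1) * y * exp (- (y + 1))).
    { apply Rmult_le_compat_r; lra. }
    nra. }
  apply (filterlim_ext (fun s => (upper_inc_gamma s y / Gamma_fn s - 1) + 1)). intros; ring.
  assert (Hc := fl_plus (Rbar_locally p_infty) _ _ _ _ H (fl_const (Rbar_locally p_infty) 1)).
  rewrite Rplus_0_l in Hc. exact Hc.
Qed.

Lemma Hfun_lim_inf lam x : 0 < lam ->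
  filterlim (fun s => Hfun lam x s) (Rbar_locally p_infty) (locally (cc lam * (exp (lam * exp (- x)) - 1))).
Proof.
  intros Hl. set (y := lam * exp (- x)).
  assert (Hy : 0 < y) by (unfold y; apply Rmult_lt_0_compat; auto; apply exp_pos).
  apply (filterlim_ext (fun s => cc lam * (exp y * (upper_inc_gamma s y / Gamma_fn s) - 1))).
  intros; rewrite Hfun_eq; reflexivity.
  apply (fl_mult (Rbar_locally p_infty)). apply (fl_const (Rbar_locally p_infty)).
  apply (fl_minus (Rbar_locally p_infty)). 2: apply (fl_const (Rbar_locally p_infty)).
  assert (Hc := fl_mult (Rbar_locally p_infty) _ _ _ _ (fl_const (Rbar_locally p_infty) (exp y)) (ratio_lim y Hy)).
  rewrite Rmult_1_r in Hc. exact Hc.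
Qed.

Lemma exp_series (u : R) : is_series (fun k => u ^ k / INR (fact k)) (exp u).
Proof.
  assert (H := is_exp_Reals u). unfold is_pseries in H.
  refine (is_series_ext _ _ _ _ H). intros n.
  simpl. rewrite pow_n_pow. unfold scal; simpl; unfold mult; simpl. unfold Rdiv. ring.
Qed.

Lemma exp_mul_nat (a : R) (n : nat) : exp (a * INR n) = exp a ^ n.
Proof. induction n. simpl. rewrite Rmult_0_r. apply exp_0.
  rewrite S_INR, Rmult_plus_distr_l, exp_plus, IHn, Rmult_1_r. simpl. ring. Qed.

Lemma w_eq lam x k : 0 < lam ->
  Xstar_pmf lam k * exp (- x * INR (S k)) = exp (- lam) / lam * ((lam * exp (- x)) ^ S k / INR (fact k)).
Proof.
  intros Hl. unfold Xstar_pmf. rewrite exp_mul_nat, Rpow_mult_distr. simpl. field. split. apply INR_fact_neq_0. lra.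
Qed.

Lemma w_series lam x : 0 < lam ->
  is_series (fun k => Xstar_pmf lam k * exp (- x * INR (S k)))
    (exp (- lam) / lam * (lam * exp (- x) * exp (lam * exp (- x)))).
Proof.
  intros Hl. set (u := lam * exp (- x)).
  apply (is_series_ext (fun k => scal (exp (- lam) / lam * u) (u ^ k / INR (fact k)))).
  intros k. rewrite w_eq by auto. fold u. unfold scal; simpl; unfold mult; simpl. simpl. unfold Rdiv. ring.
  replace (exp (- lam) / lam * (u * exp u)) with (scal (exp (- lam) / lam * u) (exp u)) by (unfold scal; simpl; unfold mult; simpl; ring).
  apply (@is_series_scal R_AbsRing R_NormedModule). apply exp_series.
Qed.

Lemma w_nonneg lam x k : 0 < lam -> 0 <= Xstar_pmf lam k * exp (- x * INR (S k)).
Proof. intros Hl. unfold Xstar_pmf. apply Rmult_le_pos; [|apply Rlt_le, exp_pos].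
  apply Rdiv_le_0_compat. apply Rmult_le_pos. apply Rlt_le, exp_pos. apply pow_le; lra. apply lt_0_INR, lt_O_fact. Qed.

Definition L1 (lam x : R) : R :=
  Series (fun k => Xstar_pmf lam k * exp (- x * INR (S k)) * (cc lam * (Ek k (lam * exp (- x)) - 1))).
Definition Linf (lam x : R) : R :=
  Series (fun k => Xstar_pmf lam k * exp (- x * INR (S k)) * (cc lam * (exp (lam * exp (- x)) - 1))).

Lemma EH_tannery (F : (R -> Prop) -> Prop) {FF : Filter F} lam x (a0 : nat -> R) :
  0 < lam ->
  F (fun eps => 0 < eps) ->
  (forall k, filterlim (fun eps => Hfun lam x (eps * INR (S k))) F (locally (a0 k))) ->
  (forall k, Rabs (a0 k) <= cc lam * (exp (lam * exp (- x)) + 1)) ->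
  filterlim (fun eps => EH lam eps x) F (locally (Series (fun k => Xstar_pmf lam k * exp (- x * INR (S k)) * a0 k))).
Proof.
  intros Hl Hpos Hlim Hb. unfold EH.
  apply (tannery F _ _ (fun k => Xstar_pmf lam k * exp (- x * INR (S k)) * (cc lam * (exp (lam * exp (- x)) + 1)))).
  - apply ex_series_scal_r. eexists; apply w_series; auto.
  - intros k. apply (fl_mult F). apply (fl_const F). apply Hlim.
  - apply (fimp _ _ Hpos). intros eps He k. rewrite Rabs_mult, Rabs_right by (apply Rle_ge, w_nonneg; auto).
    apply Rmult_le_compat_l. apply w_nonneg; auto. apply Hfun_bound; auto.
    apply Rmult_lt_0_compat; auto. apply lt_0_INR; lia.
  - intros k. rewrite Rabs_mult, Rabs_right by (apply Rle_ge, w_nonneg; auto).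
    apply Rmult_le_compat_l. apply w_nonneg; auto. auto.
Qed.

Lemma EH_lim1 lam x : 0 < lam -> is_lim (fun eps => EH lam eps x) 1 (L1 lam x).
Proof.
  intros Hl. unfold is_lim. simpl.
  apply (EH_tannery (locally' 1) lam x (fun k => cc lam * (Ek k (lam * exp (- x)) - 1)) Hl).
  - exists (mkposreal (1/2) ltac:(lra)). intros y Hy _. change (Rabs (y - 1) < 1/2) in Hy.
    apply Rabs_def2 in Hy. lra.
  - intros k. rewrite <- Hfun_nat by auto.
    assert (Hm : filterlim (fun eps => eps * INR (S k)) (locally' 1) (locally (INR (S k)))).
    { assert (Hi : filterlim (fun x => x) (locally' 1) (locally 1)).
      { apply (filterlim_filter_le_1 (fun x => x) (@filter_le_within R (locally 1) _ (fun u => u <> 1))).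
        apply filterlim_id. }
      assert (Hc := fl_mult (locally' 1) _ _ _ _ Hi (fl_const (locally' 1) (INR (S k)))).
      rewrite Rmult_1_l in Hc. exact Hc. }
    exact (filterlim_comp _ _ _ _ _ _ _ _ Hm (Hfun_cont lam x (INR (S k)) Hl ltac:(apply lt_0_INR; lia))).
  - intros k. rewrite <- Hfun_nat by auto. apply Hfun_bound; auto. apply lt_0_INR; lia.
Qed.

Lemma EH_liminf lam x : 0 < lam -> is_lim (fun eps => EH lam eps x) p_infty (Linf lam x).
Proof.
  intros Hl. unfold is_lim. simpl.
  apply (EH_tannery (Rbar_locally p_infty) lam x (fun k => cc lam * (exp (lam * exp (- x)) - 1)) Hl).
  - exists 0. auto.
  - intros k.
    assert (Hm : filterlim (fun eps => eps * INR (S k)) (Rbar_locally p_infty) (Rbar_locally p_infty)).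
    { assert (Hk : 0 < INR (S k)) by (apply lt_0_INR; lia).
      intros P [M HM]. exists (M / INR (S k)). intros y Hy. apply HM.
      apply (Rmult_lt_compat_r (INR (S k))) in Hy; auto. unfold Rdiv in Hy.
      rewrite Rmult_assoc, Rinv_l, Rmult_1_r in Hy; lra. }
    exact (filterlim_comp _ _ _ _ _ _ _ _ Hm (Hfun_lim_inf lam x Hl)).
  - intros k. pose proof (cc_pos lam Hl). pose proof (exp_pos (lam * exp (- x))).
    rewrite Rabs_mult, Rabs_right by lra. apply Rmult_le_compat_l. lra. apply Rabs_le; lra.
Qed.

Lemma is_series_R (a : nat -> R) l : is_series a l <-> filterlim (fun N => sum_f_R0 a N) eventually (locally l).
Proof. unfold is_series. split; apply filterlim_ext; intros; rewrite sum_n_Reals; reflexivity. Qed.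

Lemma Linf_eq lam x : 0 < lam ->
  Linf lam x = exp (- lam) / lam * (lam * exp (- x) * exp (lam * exp (- x))) * (cc lam * (exp (lam * exp (- x)) - 1)).
Proof. intros Hl. unfold Linf. rewrite Series_scal_r. f_equal. apply is_series_unique. apply w_series; auto. Qed.

Lemma LF_term lam x k : 0 < lam ->
  exp (- x * INR (S k)) * ztp lam (S k) = cc lam * ((lam * exp (- x)) ^ S k / INR (fact (S k))).
Proof.
  intros Hl. unfold ztp, cc. rewrite exp_mul_nat, Rpow_mult_distr. field. split. apply INR_fact_neq_0.
  assert (exp (- lam) < 1) by (rewrite <- exp_0; apply exp_increasing; lra). lra.
Qed.

Lemma LF_eq lam x : 0 < lam -> LF lam x = cc lam * (exp (lam * exp (- x)) - 1).
Proof.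
  intros Hl. unfold LF. set (u := lam * exp (- x)).
  apply is_series_unique.
  apply (is_series_ext (fun k => scal (cc lam) (u ^ S k / INR (fact (S k))))).
  { intros k. symmetry. apply LF_term; auto. }
  apply (@is_series_scal R_AbsRing R_NormedModule).
  apply (is_series_incr_1 (fun k => u ^ k / INR (fact k))).
  assert (Hs := exp_series u).
  assert (E : exp u = plus (exp u - 1) (u ^ 0 / INR (fact 0))) by (simpl; unfold plus; simpl; field).
  rewrite E in Hs. exact Hs.
Qed.

Lemma I0_eq u : I0 (2 * u) = Series (fun k => (u ^ k / INR (fact k)) ^ 2).
Proof. unfold I0. apply Series_ext. intros k. replace (2 * u / 2) with u by field.
  replace (2 * k)%nat with (k * 2)%nat by lia. rewrite pow_mult. unfold Rdiv. rewrite Rpow_mult_distr, pow_inv. reflexivity.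
Qed.

Lemma ak_le u k : 0 <= u -> u ^ k / INR (fact k) <= exp u.
Proof. apply (fun H => pow_le_exp u k H). Qed.

Lemma sq_series u : 0 <= u -> ex_series (fun k => (u ^ k / INR (fact k)) ^ 2).
Proof.
  intros Hu. apply (@ex_series_le R_AbsRing R_CompleteNormedModule _ (fun k => exp u * (u ^ k / INR (fact k)))).
  - intros k. change (Rabs ((u ^ k / INR (fact k)) ^ 2) <= exp u * (u ^ k / INR (fact k))).
    assert (H0 : 0 <= u ^ k / INR (fact k)) by (apply Rdiv_le_0_compat; [apply pow_le; auto| apply lt_0_INR, lt_O_fact]).
    rewrite Rabs_right by (apply Rle_ge, pow_le; auto). simpl. rewrite Rmult_1_r.
    apply Rmult_le_compat_r; auto. apply ak_le; auto.
  - apply (@ex_series_scal_l R_AbsRing R_NormedModule). eexists; apply exp_series.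
Qed.

Lemma finite_id (a : nat -> R) N :
  2 * sum_f_R0 (fun k => a k * sum_f_R0 a k) N = (sum_f_R0 a N) ^ 2 + sum_f_R0 (fun k => a k ^ 2) N.
Proof. induction N. simpl; ring. rewrite !tech5, Rmult_plus_distr_l, IHN. simpl; ring. Qed.

Definition Sfun (u : R) : R := (exp (2 * u) + I0 (2 * u)) / 2 - exp u.

Lemma aE_series u : 0 <= u ->
  is_series (fun k => u ^ k / INR (fact k) * Ek k u) ((exp (2 * u) + I0 (2 * u)) / 2).
Proof.
  intros Hu. set (a := fun k => u ^ k / INR (fact k)).
  apply is_series_R.
  apply (filterlim_ext (fun N => ((sum_f_R0 a N) ^ 2 + sum_f_R0 (fun k => a k ^ 2) N) / 2)).
  { intros N. pose proof (finite_id a N) as E. change (((sum_f_R0 a N) ^ 2 + sum_f_R0 (fun k => a k ^ 2) N) / 2 = sum_f_R0 (fun k => a k * sum_f_R0 a k) N). lra. }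
  assert (H1 := proj1 (is_series_R _ _) (exp_series u)).
  assert (H2 := proj1 (is_series_R _ _) (Series_correct _ (sq_series u Hu))).
  rewrite <- I0_eq in H2.
  replace (exp (2 * u)) with (exp u ^ 2) by (simpl; rewrite Rmult_1_r, <- exp_plus; f_equal; ring).
  unfold Rdiv. apply (fl_mult eventually). apply (fl_plus eventually). simpl.
  replace (exp u * (exp u * 1)) with (exp u * exp u) by ring.
  apply (filterlim_ext (fun N => sum_f_R0 a N * sum_f_R0 a N)). intros; simpl; ring.
  apply (fl_mult eventually); exact H1. exact H2. apply (fl_const eventually).
Qed.

Lemma L1_eq lam x : 0 < lam ->
  L1 lam x = exp (- lam) / lam * (lam * exp (- x)) * cc lam * Sfun (lam * exp (- x)).
Proof.
  intros Hl. unfold L1. set (u := lam * exp (- x)).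
  assert (Hu : 0 <= u) by (unfold u; apply Rmult_le_pos; [lra | apply Rlt_le, exp_pos]).
  apply is_series_unique.
  apply (is_series_ext (fun k => scal (exp (- lam) / lam * u * cc lam) (plus (u ^ k / INR (fact k) * Ek k u) (opp (u ^ k / INR (fact k)))))).
  { intros k. rewrite w_eq by auto. fold u. unfold scal, plus, opp; simpl; unfold mult; simpl. simpl. unfold Rdiv. ring. }
  apply (@is_series_scal R_AbsRing R_NormedModule). unfold Sfun.
  apply (@is_series_minus R_AbsRing R_NormedModule). apply aE_series; auto. apply exp_series.
Qed.

Definition bI (k : nat) : R := / (INR (fact k)) ^ 2.

Lemma bI_radius : CV_radius bI = p_infty.
Proof.
  apply CV_radius_infinite_DAlembert.
  - intros n. unfold bI. apply Rinv_neq_0_compat. apply pow_nonzero. apply INR_fact_neq_0.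
  - apply (is_lim_seq_le_le (fun _ => 0) _ (fun n => / INR (S n))).
    + intros n. unfold bI. rewrite fact_simpl, mult_INR.
      assert (H1 : 0 < INR (fact n)) by apply lt_0_INR, lt_O_fact.
      assert (H2 : 1 <= INR (S n)) by (apply (le_INR 1); lia).
      replace (/ (INR (S n) * INR (fact n)) ^ 2 / / INR (fact n) ^ 2) with (/ INR (S n) * / INR (S n)) by (field; lra).
      assert (Hr : 0 < / INR (S n) <= 1).
      { split. apply Rinv_0_lt_compat; lra. rewrite <- Rinv_1. apply Rinv_le_contravar; lra. }
      set (r := / INR (S n)) in *.
      rewrite Rabs_right by nra. split; nra.
    + apply is_lim_seq_const.
    + apply (is_lim_seq_incr_1 (fun n => / INR n)).
      replace (Finite 0) with (Rbar_inv p_infty) by reflexivity.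
      apply is_lim_seq_inv. apply is_lim_seq_INR. discriminate.
Qed.

Lemma I0_PSeries z : I0 z = PSeries bI ((z / 2) ^ 2).
Proof. unfold I0, PSeries. apply Series_ext. intros k. unfold bI. rewrite <- pow_mult.
  replace (2 * k)%nat with (k * 2)%nat by lia. rewrite pow_mult. unfold Rdiv. ring. Qed.

Lemma I0_cont z : continuous I0 z.
Proof.
  apply (continuous_ext (fun z => PSeries bI ((z / 2) ^ 2))). intros; symmetry; apply I0_PSeries.
  apply (continuous_comp (fun z => (z / 2) ^ 2) (PSeries bI)).
  apply (@ex_derive_continuous R_AbsRing R_NormedModule). auto_derive. auto.
  apply continuity_pt_filterlim. apply PSeries_continuity. rewrite bI_radius. simpl. auto.
Qed.

Lemma exp_neg_lim lam : filterlim (fun x => lam * exp (- x)) (Rbar_locally p_infty) (locally 0).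
Proof.
  apply (lim_inf_bound _ (Rabs lam)). intros t Ht.
  rewrite Rabs_mult, (Rabs_right (exp (- t))) by (apply Rle_ge, Rlt_le, exp_pos).
  rewrite exp_Ropp. unfold Rdiv. apply Rmult_le_compat_l. apply Rabs_pos.
  apply Rinv_le_contravar. lra. pose proof (exp_ineq1_le t). lra.
Qed.

Lemma subst_gen (psi : R -> R) lam : 0 < lam -> (forall u, continuous psi u) ->
  is_RInt_gen (fun x => psi (lam * exp (- x)) * (lam * exp (- x))) (at_right 0) (Rbar_locally p_infty) (RInt psi 0 lam).
Proof.
  intros Hl Hc.
  set (Psi := fun v => RInt psi 0 v).
  assert (HD : forall v, is_derive Psi v (psi v)).
  { intros v. apply (is_derive_RInt psi Psi 0 v). 2: apply Hc.
    exists (mkposreal 1 Rlt_0_1). intros b _. apply (@RInt_correct R_CompleteNormedModule).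
    apply (@ex_RInt_continuous R_CompleteNormedModule). intros; apply Hc. }
  assert (HPc : forall v, continuous Psi v).
  { intros v. apply (@ex_derive_continuous R_AbsRing R_NormedModule). eexists; apply HD. }
  set (F := fun x => - Psi (lam * exp (- x))).
  assert (HF : forall x, is_derive F x (psi (lam * exp (- x)) * (lam * exp (- x)))).
  { intros x. unfold F.
    apply (is_derive_ext (fun x => -1 * Psi (lam * exp (- x)))). intros; simpl; ring.
    replace (psi (lam * exp (- x)) * (lam * exp (- x))) with (-1 * (scal (- (lam * exp (- x))) (psi (lam * exp (- x))))) by (unfold scal; simpl; unfold mult; simpl; ring).
    apply is_derive_scal. apply (is_derive_comp Psi (fun x => lam * exp (- x))). apply HD.
    auto_derive. auto. ring. }
  change (RInt psi 0 lam) with (Psi lam).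
  replace (Psi lam) with ((- Psi 0) - F 0).
  2:{ unfold F, Psi. rewrite Ropp_0, exp_0, Rmult_1_r, RInt_point. unfold zero; simpl. ring. }
  apply (gen_antider F _ (at_right 0) (Rbar_locally p_infty)).
  - apply (at_right0_intro _ 1); [lra | intros; lra].
  - exists 0; auto.
  - intros; apply HF.
  - intros x _. apply (continuous_mult (fun x => psi (lam * exp (- x))) (fun x => lam * exp (- x))).
    apply (continuous_comp (fun x => lam * exp (- x)) psi). apply (@ex_derive_continuous R_AbsRing R_NormedModule). auto_derive. auto. apply Hc.
    apply (@ex_derive_continuous R_AbsRing R_NormedModule). auto_derive. auto.
  - apply cont_at_right0. apply (@ex_derive_continuous R_AbsRing R_NormedModule). eexists; apply HF.
  - unfold F. apply (fl_opp (Rbar_locally p_infty)). apply (fl_cont (Rbar_locally p_infty)). apply HPc. apply exp_neg_lim.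
Qed.

Lemma deriv_pow_c (c : R) (k : nat) x :
  is_derive (fun u => (c * (exp u - 1)) ^ k) x (INR k * (c * exp x) * (c * (exp x - 1)) ^ pred k).
Proof. apply (is_derive_pow (fun u => c * (exp u - 1)) k x). auto_derive; auto. ring. Qed.

Lemma cont_pow_c (c : R) (k : nat) x : continuous (fun u => (c * (exp u - 1)) ^ k) x.
Proof. apply (@ex_derive_continuous R_AbsRing R_NormedModule). eexists; apply deriv_pow_c. Qed.

Lemma RInt_antider (P p : R -> R) a b : (forall x, is_derive P x (p x)) -> (forall x, continuous p x) ->
  RInt p a b = P b - P a.
Proof. intros HD HC. apply is_RInt_unique. apply (is_RInt_derive P p); intros; auto. Qed.

Lemma q_facts lam : 0 < lam -> 0 < exp (- lam) < 1 /\ cc lam * (exp lam - 1) = 1.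
Proof.
  intros Hl. assert (H : exp (- lam) < 1) by (rewrite <- exp_0; apply exp_increasing; lra).
  pose proof (exp_pos (- lam)). split. lra.
  unfold cc. replace (exp lam) with (/ exp (- lam)) by (rewrite exp_Ropp, Rinv_inv; auto).
  field. lra.
Qed.

Lemma Lim_EH_inf lam x : 0 < lam -> real (Lim (fun eps => EH lam eps x) p_infty) = Linf lam x.
Proof. intros Hl. rewrite (is_lim_unique _ _ _ (EH_liminf lam x Hl)). reflexivity. Qed.

Lemma Lim_EH_1 lam x : 0 < lam -> real (Lim (fun eps => EH lam eps x) 1) = L1 lam x.
Proof. intros Hl. rewrite (is_lim_unique _ _ _ (EH_lim1 lam x Hl)). reflexivity. Qed.

Lemma alg1 q lam k : 0 < lam -> 0 < q -> q < 1 -> 0 < k -> q / (lam * (q / (1 - q)) * k) = (1 - q) / (k * lam).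
Proof. intros. field. repeat split; lra. Qed.

Definition psiI (lam : R) (m : nat) (u : R) : R :=
  exp (- lam) / lam * exp u * (cc lam * (exp u - 1)) ^ S m.

Lemma part2 lam m : 0 < lam ->
  is_RInt_gen (Rinf_integrand lam (S (S m))) (at_right 0) (Rbar_locally p_infty)
    ((1 - exp (- lam)) / (INR (S (S m)) * lam)).
Proof.
  intros Hl. destruct (q_facts lam Hl) as [[Hq0 Hq1] Hcw].
  assert (Hc := cc_pos lam Hl).
  assert (H := subst_gen (psiI lam m) lam Hl).
  assert (Hcont : forall u, continuous (psiI lam m) u).
  { intros u. unfold psiI. apply (continuous_mult (fun u => exp (- lam) / lam * exp u)).
    apply (@ex_derive_continuous R_AbsRing R_NormedModule). auto_derive. auto. apply cont_pow_c. }
  specialize (H Hcont).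
  set (P := fun u => exp (- lam) / (lam * cc lam * INR (S (S m))) * (cc lam * (exp u - 1)) ^ S (S m)).
  assert (HV : RInt (psiI lam m) 0 lam = (1 - exp (- lam)) / (INR (S (S m)) * lam)).
  { rewrite (RInt_antider P).
    - unfold P. rewrite Hcw, pow1, exp_0. replace (cc lam * (1 - 1)) with 0 by ring. rewrite pow_i by lia.
      rewrite Rmult_0_r, Rmult_1_r, Rminus_0_r. unfold cc. apply alg1; auto. apply lt_0_INR; lia.
    - intros x. unfold P. 
      apply (is_derive_ext (fun u => exp (- lam) / (lam * cc lam * INR (S (S m))) * (cc lam * (exp u - 1)) ^ S (S m))). auto.
      replace (psiI lam m x) with (exp (- lam) / (lam * cc lam * INR (S (S m))) * (INR (S (S m)) * (cc lam * exp x) * (cc lam * (exp x - 1)) ^ pred (S (S m)))).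
      apply is_derive_scal. apply deriv_pow_c.
      unfold psiI. simpl pred. field. assert (0 < INR (S (S m))) by (apply lt_0_INR; lia). repeat split; lra.
    - auto. }
  rewrite <- HV.
  apply (is_RInt_gen_ext (fun x => psiI lam m (lam * exp (- x)) * (lam * exp (- x)))).
  - apply (Filter_prod _ _ _ (fun _ => True) (fun _ => True)). apply filter_true. apply filter_true.
    intros a b _ _ x _. unfold Rinf_integrand. rewrite Lim_EH_inf, Linf_eq, LF_eq by auto.
    replace (S (S m) - 2)%nat with m by lia. unfold psiI. simpl. field. lra.
  - exact H.
Qed.

Lemma deriv_pow_e (k : nat) x :
  is_derive (fun u => (exp u - 1) ^ k) x (INR k * exp x * (exp x - 1) ^ pred k).
Proof. apply (is_derive_pow (fun u => exp u - 1) k x). auto_derive; auto. ring. Qed.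

Lemma Sfun_cont u : continuous Sfun u.
Proof.
  assert (H1 : filterlim (fun x => exp (2 * x)) (locally u) (locally (exp (2 * u)))).
  { apply (@ex_derive_continuous R_AbsRing R_NormedModule (fun x => exp (2 * x))). auto_derive. auto. }
  assert (H2 : filterlim (fun x => I0 (2 * x)) (locally u) (locally (I0 (2 * u)))).
  { apply (fl_cont (locally u) (fun x => 2 * x) I0 (2 * u)). apply I0_cont.
    apply (@ex_derive_continuous R_AbsRing R_NormedModule (fun x => 2 * x)). auto_derive. auto. }
  assert (H3 : filterlim exp (locally u) (locally (exp u))).
  { apply (@ex_derive_continuous R_AbsRing R_NormedModule exp). auto_derive. auto. }
  assert (H4 := fl_plus (locally u) _ _ _ _ H1 H2).
  assert (H5 := fl_mult (locally u) _ _ _ _ H4 (fl_const (locally u) (/ 2))).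
  exact (fl_minus (locally u) _ _ _ _ H5 H3).
Qed.

Definition psi1 (lam : R) (m : nat) (u : R) : R :=
  exp (- lam) / lam * cc lam * Sfun u * (cc lam * (exp u - 1)) ^ m.

Lemma psi1_cont lam m u : continuous (psi1 lam m) u.
Proof.
  assert (H1 := fl_mult (locally u) _ _ _ _ (fl_const (locally u) (exp (- lam) / lam * cc lam)) (Sfun_cont u)).
  exact (fl_mult (locally u) _ _ _ _ H1 (cont_pow_c (cc lam) m u)).
Qed.

Lemma alg2 q lam J cm om M : 0 < lam -> 0 < q -> q < 1 -> 0 <= M -> 0 < cm -> 0 < om ->
  let c := q / (1 - q) in let W := (1 - q) / q in
  q * c / lam * (1 / 2 * (lam * (cm * J)) + (cm / 2 * (W * W * (/ cm) / (M + 2) - W * (/ cm) / (M + 1)) - 0)) =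
  q * q * (cm * om) / (2 * ((1 - q) * om)) * J + (q + (M + 2) - 1) / (2 * (M + 2) * ((M + 2) - 1) * lam) - q / (((M + 2) - 1) * lam).
Proof. intros. unfold c, W. field. repeat split; lra. Qed.

Definition Qf (c : R) (m : nat) (u : R) : R :=
  c ^ m / 2 * ((exp u - 1) ^ S (S m) / INR (S (S m)) - (exp u - 1) ^ S m / INR (S m)).

Lemma Qf_derive c m x : is_derive (Qf c m) x ((exp (2 * x) / 2 - exp x) * (c * (exp x - 1)) ^ m).
Proof.
  unfold Qf.
  replace ((exp (2 * x) / 2 - exp x) * (c * (exp x - 1)) ^ m) with
    (c ^ m / 2 * ((INR (S (S m)) * exp x * (exp x - 1) ^ pred (S (S m))) / INR (S (S m)) - (INR (S m) * exp x * (exp x - 1) ^ pred (S m)) / INR (S m))).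
  - apply is_derive_scal.
    apply (@is_derive_minus R_AbsRing R_NormedModule (fun u => (exp u - 1) ^ S (S m) / INR (S (S m))) (fun u => (exp u - 1) ^ S m / INR (S m))).
    + apply (is_derive_ext (fun u => / INR (S (S m)) * (exp u - 1) ^ S (S m))). intros; simpl; unfold Rdiv; apply Rmult_comm.
      replace (INR (S (S m)) * exp x * (exp x - 1) ^ pred (S (S m)) / INR (S (S m))) with (/ INR (S (S m)) * (INR (S (S m)) * exp x * (exp x - 1) ^ pred (S (S m)))) by (unfold Rdiv; ring).
      apply is_derive_scal. apply deriv_pow_e.
    + apply (is_derive_ext (fun u => / INR (S m) * (exp u - 1) ^ S m)). intros; simpl; unfold Rdiv; apply Rmult_comm.
      replace (INR (S m) * exp x * (exp x - 1) ^ pred (S m) / INR (S m)) with (/ INR (S m) * (INR (S m) * exp x * (exp x - 1) ^ pred (S m))) by (unfold Rdiv; ring).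
      apply is_derive_scal. apply deriv_pow_e.
  - simpl pred. rewrite Rpow_mult_distr.
    replace (exp (2 * x)) with (exp x * exp x) by (rewrite <- exp_plus; f_equal; ring).
    cbn [pow]. field. split; apply not_0_INR; lia.
Qed.

Lemma Qf_cont c m x : continuous (fun u => (exp (2 * u) / 2 - exp u) * (c * (exp u - 1)) ^ m) x.
Proof.
  apply (fl_mult (locally x)). apply (@ex_derive_continuous R_AbsRing R_NormedModule (fun u => exp (2 * u) / 2 - exp u)). auto_derive; auto.
  apply cont_pow_c.
Qed.

Lemma A_eq lam m : 0 < lam ->
  RInt (fun u => I0 (2 * u) * (cc lam * (exp u - 1)) ^ m) 0 lam =
  lam * (cc lam ^ m * RInt (fun y => I0 (2 * lam * y) * (exp (lam * y) - 1) ^ m) 0 1).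
Proof.
  intros Hl.
  set (f := fun u => I0 (2 * u) * (cc lam * (exp u - 1)) ^ m).
  assert (Hfc : forall u, continuous f u).
  { intros u. unfold f. apply (fl_mult (locally u)).
    apply (fl_cont (locally u) (fun x => 2 * x) I0 (2 * u)). apply I0_cont.
    apply (@ex_derive_continuous R_AbsRing R_NormedModule (fun x => 2 * x)). auto_derive. auto.
    apply cont_pow_c. }
  assert (E1 : RInt f 0 lam = RInt (fun y => scal lam (f (lam * y + 0))) 0 1).
  { assert (E := @RInt_comp_lin R_CompleteNormedModule f lam 0 0 1).
    replace (lam * 0 + 0) with 0 in E by ring. replace (lam * 1 + 0) with lam in E by ring.
    symmetry. apply E.
    apply (@ex_RInt_continuous R_CompleteNormedModule). intros; apply Hfc. }
  rewrite E1.
  set (g := fun y => I0 (2 * lam * y) * (exp (lam * y) - 1) ^ m).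
  assert (Hgc : ex_RInt g 0 1).
  { apply (@ex_RInt_continuous R_CompleteNormedModule). intros z _. unfold g. apply (fl_mult (locally z)).
    apply (fl_cont (locally z) (fun x => 2 * lam * x) I0 (2 * lam * z)). apply I0_cont.
    apply (@ex_derive_continuous R_AbsRing R_NormedModule (fun x => 2 * lam * x)). auto_derive. auto.
    apply (@ex_derive_continuous R_AbsRing R_NormedModule (fun x => (exp (lam * x) - 1) ^ m)). auto_derive. auto. }
  rewrite (RInt_ext _ (fun y => scal (lam * cc lam ^ m) (g y))).
  - etransitivity. apply (RInt_scal g 0 1 (lam * cc lam ^ m) Hgc). unfold scal; simpl; unfold mult; simpl. ring.
  - intros y _. unfold f, g, scal; simpl; unfold mult; simpl.
    replace (2 * (lam * y + 0)) with (2 * lam * y) by ring. replace (lam * y + 0) with (lam * y) by ring.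
    rewrite Rpow_mult_distr. ring.
Qed.

Lemma psi1_RInt lam m : 0 < lam ->
  RInt (psi1 lam m) 0 lam =
  exp (- lam) * cc lam / lam *
   (1 / 2 * RInt (fun u => I0 (2 * u) * (cc lam * (exp u - 1)) ^ m) 0 lam + (Qf (cc lam) m lam - Qf (cc lam) m 0)).
Proof.
  intros Hl.
  set (fA := fun u => I0 (2 * u) * (cc lam * (exp u - 1)) ^ m).
  set (fB := fun u => (exp (2 * u) / 2 - exp u) * (cc lam * (exp u - 1)) ^ m).
  assert (HA : is_RInt fA 0 lam (RInt fA 0 lam)).
  { apply (@RInt_correct R_CompleteNormedModule). apply (@ex_RInt_continuous R_CompleteNormedModule).
    intros u _. unfold fA. apply (fl_mult (locally u)).
    apply (fl_cont (locally u) (fun x => 2 * x) I0 (2 * u)). apply I0_cont.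
    apply (@ex_derive_continuous R_AbsRing R_NormedModule (fun x => 2 * x)). auto_derive. auto.
    apply cont_pow_c. }
  assert (HB : is_RInt fB 0 lam (Qf (cc lam) m lam - Qf (cc lam) m 0)).
  { apply (is_RInt_derive (Qf (cc lam) m) fB). intros; apply Qf_derive. intros; apply Qf_cont. }
  assert (H := is_RInt_scal _ _ _ (exp (- lam) * cc lam / lam) _ (is_RInt_plus _ _ _ _ _ _ (is_RInt_scal _ _ _ (1 / 2) _ HA) HB)).
  apply is_RInt_unique.
  refine (is_RInt_ext _ _ _ _ _ _ H). intros x _.
  unfold psi1, fA, fB, Sfun, scal, plus; simpl; unfold mult; simpl. field. lra.
Qed.

Lemma part1 lam m : 0 < lam ->
  is_RInt_gen (R1_integrand lam (S (S m))) (at_right 0) (Rbar_locally p_infty)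
    (exp (- INR (S (S m)) * lam) / (2 * (1 - exp (- lam)) ^ (S (S m) - 1))
       * RInt (fun y => I0 (2 * lam * y) * (exp (lam * y) - 1) ^ (S (S m) - 2)) 0 1
     + (exp (- lam) + INR (S (S m)) - 1) / (2 * INR (S (S m)) * (INR (S (S m)) - 1) * lam)
     - exp (- lam) / ((INR (S (S m)) - 1) * lam)).
Proof.
  intros Hl. destruct (q_facts lam Hl) as [[Hq0 Hq1] Hcw].
  assert (Hc := cc_pos lam Hl).
  assert (H := subst_gen (psi1 lam m) lam Hl (psi1_cont lam m)).
  assert (Eq : forall x, R1_integrand lam (S (S m)) x = psi1 lam m (lam * exp (- x)) * (lam * exp (- x))).
  { intros x. unfold R1_integrand. rewrite Lim_EH_1, L1_eq, LF_eq by auto.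
    replace (S (S m) - 2)%nat with m by lia. unfold psi1. field. lra. }
  match goal with |- is_RInt_gen _ _ _ ?v => replace v with (RInt (psi1 lam m) 0 lam) end.
  - apply (is_RInt_gen_ext (fun x => psi1 lam m (lam * exp (- x)) * (lam * exp (- x)))).
    + apply (Filter_prod _ _ _ (fun _ => True) (fun _ => True)). apply filter_true. apply filter_true.
      intros a b _ _ x _. symmetry. apply Eq.
    + exact H.
  - rewrite psi1_RInt, A_eq by auto. replace (S (S m) - 2)%nat with m by lia. replace (S (S m) - 1)%nat with (S m) by lia.
    set (J := RInt (fun y => I0 (2 * lam * y) * (exp (lam * y) - 1) ^ m) 0 1).
    set (q := exp (- lam)).
    assert (Hcq : cc lam = q / (1 - q)) by reflexivity.
    assert (HW : exp lam - 1 = (1 - q) / q).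
    { unfold q. rewrite exp_Ropp. field. apply Rgt_not_eq, exp_pos. }
    assert (Hcm : 0 < cc lam ^ m) by (apply pow_lt; auto).
    assert (Hom : 0 < (1 - q) ^ m) by (apply pow_lt; unfold q; lra).
    assert (Hwm : ((1 - q) / q) ^ m = / cc lam ^ m).
    { rewrite Hcq, <- pow_inv. f_equal. field. unfold q; split; lra. }
    assert (Hqm : q ^ m = cc lam ^ m * (1 - q) ^ m).
    { rewrite <- Rpow_mult_distr, Hcq. f_equal. field. unfold q; lra. }
    assert (Hexp : exp (- INR (S (S m)) * lam) = q * q * q ^ m).
    { unfold q. rewrite <- exp_mul_nat. replace (- lam * INR m) with (- INR m * lam) by ring.
      rewrite <- !exp_plus. f_equal. rewrite !S_INR. ring. }
    rewrite Hexp, Hqm. unfold Qf. rewrite HW, exp_0. replace (1 - 1) with 0 by ring.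
    rewrite !pow_i by lia. cbn [pow]. rewrite Hwm. rewrite !S_INR.
    replace (0 / (INR m + 1 + 1)) with 0 by (field; pose proof (pos_INR m); lra).
    replace (0 / (INR m + 1)) with 0 by (field; pose proof (pos_INR m); lra).
    rewrite Hcq. 
    pose proof (alg2 q lam J (cc lam ^ m) ((1 - q) ^ m) (INR m) Hl ltac:(unfold q; lra) ltac:(unfold q; lra) (pos_INR m) Hcm Hom) as E.
    simpl in E. rewrite <- Hcq in *.
    replace (INR m + 1 + 1) with (INR m + 2) by ring. rewrite (Rminus_0_r 0), Rmult_0_r, <- (Rmult_assoc ((1 - q) / q) ((1 - q) / q)). exact E.
Qed.

Theorem mainTheorem6 (lam : R) (n : nat) (Hlam : 0 < lam) (Hn : (2 <= n)%nat) :
  (* 1. R_1(F) *)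
  (forall x, 0 < x -> ex_finite_lim (fun eps => EH lam eps x) 1) /\
  is_RInt_gen (R1_integrand lam n) (at_right 0) (Rbar_locally p_infty)
    (exp (- INR n * lam) / (2 * (1 - exp (- lam)) ^ (n - 1))
       * RInt (fun y => I0 (2 * lam * y) * (exp (lam * y) - 1) ^ (n - 2)) 0 1
     + (exp (- lam) + INR n - 1) / (2 * INR n * (INR n - 1) * lam)
     - exp (- lam) / ((INR n - 1) * lam)) /\
  (* 2. R_infty(F) *)
  (forall x, 0 < x -> ex_finite_lim (fun eps => EH lam eps x) p_infty) /\
  is_RInt_gen (Rinf_integrand lam n) (at_right 0) (Rbar_locally p_infty)
    ((1 - exp (- lam)) / (INR n * lam)).
Proof.
  destruct n as [|[|m]]; try lia.
  split; [|split; [|split]].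
  - intros x _. exists (L1 lam x). apply EH_lim1; auto.
  - apply part1; auto.
  - intros x _. exists (Linf lam x). apply EH_liminf; auto.
  - apply part2; auto.
Qed.
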